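(* Let $A$ be a unital C*-algebra. There is a bijective correspondence between quasi-states $\rho$ on $A$ and probability integrals on $\underline{A}_{\mathrm{sa}}$ internal to $\mathcal{T}(A)=[\mathcal{C}(A),\mathbf{Set}]$; externally, the latter are families $(I_C)_{C\in\mathcal{C}(A)}$ of positive linear functionals $I_C\colon C_{\mathrm{sa}}\to\mathbb{R}$ with $I_C(1)=1$ that are natural, i.e. $I_D|_{C_{\mathrm{sa}}}=I_C$ whenever $C\subseteq D$. The correspondence sends $\rho$ to $I_C=\rho|_{C_{\mathrm{sa}}}$ and, conversely, $(I_C)$ to the unique complex-linear-on-real-and-imaginary-parts extension of $a\mapsto I_{C^*(a)}(a)$ ($a\in A_{\mathrm{sa}}$, $C^*(a)$ the C*-subalgebra generated by $a$ and $1$). Under this correspondence faithful quasi-states correspond to faithful probability integrals (those with $I_C(f)=0$, $f\ge0$ implying $f=0$ for all $C$).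
   Context: $\mathcal{C}(A)$: poset of commutative unital C*-subalgebras of $A$ under inclusion; $\underline{A}(C)=C$ is the Bohrification, an internal commutative C*-algebra, and $\underline{A}_{\mathrm{sa}}(C)=C_{\mathrm{sa}}$; the internal Dedekind reals in $\mathcal{T}(A)$ form the constant functor $C\mapsto\mathbb{R}$. A quasi-linear functional on $A$ is a map $\rho\colon A\to\mathbb{C}$ that is linear on every commutative C*-subalgebra and satisfies $\rho(a+ib)=\rho(a)+i\rho(b)$ for all $a,b\in A_{\mathrm{sa}}$; it is a quasi-state if moreover $\rho(A^+)\subseteq\mathbb{R}^+$ and $\rho(1)=1$; it is faithful if $\rho(a)=0$ with $a\ge0$ implies $a=0$. A probability integral on a Riesz space $R$ with strong unit $1$ is a linear $I\colon R\to\mathbb{R}$ with $I(f)\ge0$ for $f\ge0$ and $I(1)=1$. *)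

(* Defs.v *)
From Stdlib Require Import Reals.
Open Scope R_scope.

Record Cx := mkC { Re : R ; Im : R }.
Definition C0 : Cx := mkC 0 0.
Definition C1 : Cx := mkC 1 0.
Definition Ci : Cx := mkC 0 1.
Definition RtoC (r : R) : Cx := mkC r 0.
Definition Cadd (z w : Cx) : Cx := mkC (Re z + Re w) (Im z + Im w).
Definition Cmul (z w : Cx) : Cx :=
  mkC (Re z * Re w - Im z * Im w) (Re z * Im w + Im z * Re w).
Definition Cconj (z : Cx) : Cx := mkC (Re z) (- Im z).
Definition Cmod (z : Cx) : R := sqrt (Re z * Re z + Im z * Im z).

Record CStarAlgebra := {
  car :> Type;
  a0 : car;
  a1 : car;
  aadd : car -> car -> car;
  aopp : car -> car;
  asmul : Cx -> car -> car;
  amul : car -> car -> car;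
  astar : car -> car;
  anorm : car -> R;
  aadd_assoc : forall x y z, aadd x (aadd y z) = aadd (aadd x y) z;
  aadd_comm : forall x y, aadd x y = aadd y x;
  aadd_0 : forall x, aadd x a0 = x;
  aadd_opp : forall x, aadd x (aopp x) = a0;
  asmul_assoc : forall s t x, asmul s (asmul t x) = asmul (Cmul s t) x;
  asmul_1 : forall x, asmul C1 x = x;
  asmul_addr : forall s x y, asmul s (aadd x y) = aadd (asmul s x) (asmul s y);
  asmul_addl : forall s t x, asmul (Cadd s t) x = aadd (asmul s x) (asmul t x);
  amul_assoc : forall x y z, amul x (amul y z) = amul (amul x y) z;
  amul_1l : forall x, amul a1 x = x;
  amul_1r : forall x, amul x a1 = x;
  amul_addl : forall x y z, amul (aadd x y) z = aadd (amul x z) (amul y z);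
  amul_addr : forall x y z, amul x (aadd y z) = aadd (amul x y) (amul x z);
  amul_smull : forall s x y, amul (asmul s x) y = asmul s (amul x y);
  amul_smulr : forall s x y, amul x (asmul s y) = asmul s (amul x y);
  astar_invol : forall x, astar (astar x) = x;
  astar_add : forall x y, astar (aadd x y) = aadd (astar x) (astar y);
  astar_smul : forall s x, astar (asmul s x) = asmul (Cconj s) (astar x);
  astar_mul : forall x y, astar (amul x y) = amul (astar y) (astar x);
  anorm_nonneg : forall x, 0 <= anorm x;
  anorm_eq0 : forall x, anorm x = 0 -> x = a0;
  anorm_triangle : forall x y, anorm (aadd x y) <= anorm x + anorm y;
  anorm_smul : forall s x, anorm (asmul s x) = Cmod s * anorm x;
  anorm_mul : forall x y, anorm (amul x y) <= anorm x * anorm y;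
  anorm_cstar : forall x, anorm (amul (astar x) x) = anorm x * anorm x;
  acomplete : forall u : nat -> car,
    (forall eps, 0 < eps -> exists N, forall m n, (N <= m)%nat -> (N <= n)%nat ->
        anorm (aadd (u m) (aopp (u n))) < eps) ->
    exists l, forall eps, 0 < eps -> exists N, forall n, (N <= n)%nat ->
        anorm (aadd (u n) (aopp l)) < eps
}.

Arguments a0 {c}. Arguments a1 {c}. Arguments aadd {c}. Arguments aopp {c}.
Arguments asmul {c}. Arguments amul {c}. Arguments astar {c}. Arguments anorm {c}.

Section Defs.
Variable A : CStarAlgebra.

Definition self_adjoint (x : A) : Prop := astar x = x.

Definition positive (a : A) : Prop := exists b : A, a = amul (astar b) b.

Definition is_CStar_subalgebra (S : A -> Prop) : Prop :=
  S a1 /\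
  (forall x y, S x -> S y -> S (aadd x y)) /\
  (forall s x, S x -> S (asmul s x)) /\
  (forall x y, S x -> S y -> S (amul x y)) /\
  (forall x, S x -> S (astar x)) /\
  (forall (u : nat -> A) (l : A), (forall n, S (u n)) ->
     (forall eps, 0 < eps -> exists N, forall n, (N <= n)%nat ->
        anorm (aadd (u n) (aopp l)) < eps) -> S l).

Definition in_CA (C : A -> Prop) : Prop :=
  is_CStar_subalgebra C /\ (forall x y, C x -> C y -> amul x y = amul y x).

Definition Cstar_gen (a : A) : A -> Prop :=
  fun x => forall S, is_CStar_subalgebra S -> S a -> S x.

Definition positive_in (C : A -> Prop) (f : A) : Prop :=
  exists g : A, C g /\ f = amul (astar g) g.

Definition quasi_linear (rho : A -> Cx) : Prop :=
  (forall C, in_CA C ->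
     (forall x y, C x -> C y -> rho (aadd x y) = Cadd (rho x) (rho y)) /\
     (forall s x, C x -> rho (asmul s x) = Cmul s (rho x))) /\
  (forall a b, self_adjoint a -> self_adjoint b ->
     rho (aadd a (asmul Ci b)) = Cadd (rho a) (Cmul Ci (rho b))).

Definition quasi_state (rho : A -> Cx) : Prop :=
  quasi_linear rho /\
  (forall a, positive a -> Im (rho a) = 0 /\ 0 <= Re (rho a)) /\
  rho a1 = C1.

Definition faithful_qs (rho : A -> Cx) : Prop :=
  forall a, positive a -> rho a = C0 -> a = a0.

(* External description of an internal probability integral on A_sa in T(A):
   a family C |-> I_C : C_sa -> R (only the values on C in C(A) and
   f in C_sa matter). *)
Definition prob_integral_family (I : (A -> Prop) -> A -> R) : Prop :=
  (forall C, in_CA C ->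
     (forall f g, C f -> self_adjoint f -> C g -> self_adjoint g ->
        I C (aadd f g) = I C f + I C g) /\
     (forall (r : R) f, C f -> self_adjoint f -> I C (asmul (RtoC r) f) = r * I C f) /\
     (forall f, C f -> self_adjoint f -> positive_in C f -> 0 <= I C f) /\
     I C a1 = 1) /\
  (forall C D, in_CA C -> in_CA D -> (forall x, C x -> D x) ->
     forall f, C f -> self_adjoint f -> I D f = I C f).

Definition faithful_pif (I : (A -> Prop) -> A -> R) : Prop :=
  forall C, in_CA C -> forall f, C f -> self_adjoint f -> positive_in C f ->
    I C f = 0 -> f = a0.

Definition re_part (a : A) : A := asmul (RtoC (/2)) (aadd a (astar a)).
Definition im_part (a : A) : A :=
  asmul (mkC 0 (- / 2)) (aadd a (aopp (astar a))).

Definition restrict_qs (rho : A -> Cx) : (A -> Prop) -> A -> R :=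
  fun C f => Re (rho f).

Definition extend_pif (I : (A -> Prop) -> A -> R) : A -> Cx :=
  fun a => mkC (I (Cstar_gen (re_part a)) (re_part a))
               (I (Cstar_gen (im_part a)) (im_part a)).

End Defs.

(* Main.v *)
Require Import Defs.
From Stdlib Require Import Reals Lra Lia Psatz List FunctionalExtensionality.
Open Scope R_scope.

(* reflexive normalizer for linear identities in the additive group with real scalars *)
Inductive lexp := LAtom (n : nat) | LAdd (a b : lexp) | LOpp (a : lexp) | LSc (r : R) (a : lexp) | LZero.

Section Refl.
Context {A : CStarAlgebra}.

Fixpoint leval (env : list A) (e : lexp) : A :=
  match e with
  | LAtom n => nth n env a0
  | LAdd a b => aadd (leval env a) (leval env b)
  | LOpp a => aopp (leval env a)
  | LSc r a => asmul (RtoC r) (leval env a)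
  | LZero => a0
  end.

Fixpoint coef (e : lexp) (i : nat) : R :=
  match e with
  | LAtom j => if Nat.eqb i j then 1 else 0
  | LAdd a b => coef a i + coef b i
  | LOpp a => - coef a i
  | LSc r a => r * coef a i
  | LZero => 0
  end.

Fixpoint lsum (env : list A) (f : nat -> R) : A :=
  match env with
  | nil => a0
  | x :: env' => aadd (asmul (RtoC (f 0%nat)) x) (lsum env' (fun i => f (S i)))
  end.

Local Lemma Cx_ext' (z w : Cx) : Re z = Re w -> Im z = Im w -> z = w.
Proof. destruct z, w; simpl; intros -> ->; reflexivity. Qed.

Local Lemma sm_add r s (x : A) : asmul (RtoC (r + s)) x = aadd (asmul (RtoC r) x) (asmul (RtoC s) x).
Proof. rewrite <- asmul_addl. f_equal. apply Cx_ext'; simpl; ring. Qed.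

Local Lemma canc (x y z : A) : aadd x z = aadd y z -> x = y.
Proof.
  intro H. rewrite <- (aadd_0 _ x), <- (aadd_0 _ y), <- (aadd_opp _ z), !aadd_assoc, H.
  reflexivity.
Qed.

Local Lemma sm0 (x : A) : asmul (RtoC 0) x = a0.
Proof.
  apply (canc _ _ (asmul (RtoC 0) x)). rewrite <- sm_add, Rplus_0_l.
  rewrite aadd_comm, aadd_0. reflexivity.
Qed.

Local Lemma ad0l (x : A) : aadd a0 x = x.
Proof. rewrite aadd_comm; apply aadd_0. Qed.

Local Lemma lsum_add env f g : lsum env (fun i => f i + g i) = aadd (lsum env f) (lsum env g).
Proof.
  revert f g; induction env as [|x env IH]; intros f g; simpl.
  - rewrite aadd_0. reflexivity.
  - rewrite sm_add, IH. rewrite <- !aadd_assoc. f_equal.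
    rewrite !aadd_assoc. f_equal. apply aadd_comm.
Qed.

Local Lemma lsum_sc env r f : lsum env (fun i => r * f i) = asmul (RtoC r) (lsum env f).
Proof.
  revert f; induction env as [|x env IH]; intros f; simpl.
  - apply (canc _ _ (asmul (RtoC r) a0)). rewrite <- asmul_addr, !aadd_0, ad0l. reflexivity.
  - rewrite IH, asmul_addr, asmul_assoc. f_equal. f_equal. f_equal.
    apply Cx_ext'; simpl; ring.
Qed.

Local Lemma lsum_zero env : lsum env (fun _ => 0) = a0.
Proof. induction env; simpl; auto. rewrite IHenv, sm0, aadd_0. reflexivity. Qed.

Local Lemma lsum_opp env f : lsum env (fun i => - f i) = aopp (lsum env f).
Proof.
  apply (canc _ _ (lsum env f)). rewrite aadd_comm, (aadd_comm _ (aopp _)), aadd_opp.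
  rewrite <- lsum_add. rewrite <- (lsum_zero env). f_equal.
  apply FunctionalExtensionality.functional_extensionality. intro; ring.
Qed.

Local Lemma lsum_atom env j : lsum env (fun i => if Nat.eqb i j then 1 else 0) = nth j env a0.
Proof.
  revert j; induction env as [|x env IH]; intros j; simpl.
  - destruct j; reflexivity.
  - destruct j as [|j]; simpl.
    + replace (fun i => if Nat.eqb (S i) 0 then 1 else 0) with (fun _ : nat => 0).
      rewrite lsum_zero, aadd_0. apply asmul_1.
      apply FunctionalExtensionality.functional_extensionality. reflexivity.
    + rewrite sm0, ad0l. rewrite <- IH. reflexivity.
Qed.

Local Lemma leval_lsum env e : leval env e = lsum env (coef e).
Proof.
  induction e; simpl.
  - symmetry; apply lsum_atom.
  - rewrite IHe1, IHe2, <- lsum_add. reflexivity.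
  - rewrite IHe, <- lsum_opp. reflexivity.
  - rewrite IHe, <- lsum_sc. reflexivity.
  - symmetry; apply lsum_zero.
Qed.

Local Lemma lsum_ext env f g : (forall i, (i < length env)%nat -> f i = g i) -> lsum env f = lsum env g.
Proof.
  revert f g; induction env as [|x env IH]; intros f g H; simpl; auto.
  rewrite (H 0%nat) by (simpl; lia). f_equal. apply IH. intros i Hi. apply H. simpl; lia.
Qed.

Lemma lexp_eq env e1 e2 : (forall i, (i < length env)%nat -> coef e1 i = coef e2 i) ->
  leval env e1 = leval env e2.
Proof. intro H. rewrite !leval_lsum. apply lsum_ext. exact H. Qed.

End Refl.

Ltac find_idx x l :=
  match l with
  | nil => constr:(@None nat)
  | cons ?y ?l' => match y with
                   | x => constr:(Some 0%nat)
                   | _ => let r := find_idx x l' in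
                          match r with
                          | Some ?n => constr:(Some (S n))
                          | None => constr:(@None nat)
                          end
                   end
  end.

Ltac add_atoms t l :=
  match t with
  | @aadd _ ?x ?y => let l1 := add_atoms x l in add_atoms y l1
  | @aopp _ ?x => add_atoms x l
  | @asmul _ (RtoC _) ?x => add_atoms x l
  | @a0 _ => l
  | _ => let r := find_idx t l in
         match r with
         | Some _ => l
         | None => constr:(cons t l)
         end
  end.

Ltac reify t l :=
  match t with
  | @aadd _ ?x ?y => let a := reify x l in let b := reify y l in constr:(LAdd a b)
  | @aopp _ ?x => let a := reify x l in constr:(LOpp a)
  | @asmul _ (RtoC ?r) ?x => let a := reify x l in constr:(LSc r a)
  | @a0 _ => constr:(LZero)
  | _ => let r := find_idx t l in
         match r with
         | Some ?n => constr:(LAtom n)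
         end
  end.

Ltac agroup :=
  match goal with
  | |- @eq (car ?A) ?L ?R =>
      let l0 := add_atoms L (@nil (car A)) in
      let l := add_atoms R l0 in
      let eL := reify L l in
      let eR := reify R l in
      change (leval l eL = leval l eR);
      apply lexp_eq; intros i Hi; simpl in Hi;
      repeat (first [ exfalso; lia
                    | destruct i as [|i]; [simpl; first [solve [ring] | solve [field; lra] | solve [field; auto] | lra] |] ])
  end.


Section Basics.
Context {A : CStarAlgebra}.

Declare Scope alg_scope.
Delimit Scope alg_scope with al.
Local Notation "x ⊕ y" := (@aadd A x y) (at level 50, left associativity).
Local Notation "x ⊗ y" := (@amul A x y) (at level 40, left associativity).
Local Notation "r ⋅ x" := (@asmul A (RtoC r) x) (at level 40, no associativity).
Local Notation "⊖ x" := (@aopp A x) (at level 35).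
Local Notation "x ⊖ y" := (@aadd A x (@aopp A y)) (at level 50, left associativity).
Local Notation "'O'" := (@a0 A).
Local Notation "'I'" := (@a1 A).

Lemma Cx_ext (z w : Cx) : Re z = Re w -> Im z = Im w -> z = w.
Proof. destruct z, w; simpl; intros -> ->; reflexivity. Qed.

Lemma RtoC_add r s : Cadd (RtoC r) (RtoC s) = RtoC (r + s).
Proof. apply Cx_ext; simpl; ring. Qed.
Lemma RtoC_mul r s : Cmul (RtoC r) (RtoC s) = RtoC (r * s).
Proof. apply Cx_ext; simpl; ring. Qed.
Lemma RtoC_conj r : Cconj (RtoC r) = RtoC r.
Proof. apply Cx_ext; simpl; ring. Qed.

Lemma add0l (x : A) : O ⊕ x = x.
Proof. rewrite aadd_comm; apply aadd_0. Qed.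
Lemma addNl (x : A) : ⊖ x ⊕ x = O.
Proof. rewrite aadd_comm; apply aadd_opp. Qed.
Lemma addA (x y z : A) : x ⊕ (y ⊕ z) = x ⊕ y ⊕ z.
Proof. apply aadd_assoc. Qed.
Lemma addC (x y : A) : x ⊕ y = y ⊕ x.
Proof. apply aadd_comm. Qed.
Lemma addCA (x y z : A) : x ⊕ (y ⊕ z) = y ⊕ (x ⊕ z).
Proof. rewrite !addA, (addC x y); reflexivity. Qed.
Lemma addAC (x y z : A) : x ⊕ y ⊕ z = x ⊕ z ⊕ y.
Proof. rewrite <- !addA, (addC y z); reflexivity. Qed.

Lemma add_cancel_r (x y z : A) : x ⊕ z = y ⊕ z -> x = y.
Proof.
  intro H. rewrite <- (aadd_0 _ x), <- (aadd_0 _ y), <- (aadd_opp _ z), !addA, H.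
  reflexivity.
Qed.
Lemma add_cancel_l (x y z : A) : z ⊕ x = z ⊕ y -> x = y.
Proof. rewrite (addC z x), (addC z y). apply add_cancel_r. Qed.

Lemma opp_unique (x y : A) : y ⊕ x = O -> y = ⊖ x.
Proof. intro H. apply (add_cancel_r _ _ x). rewrite H, addNl. reflexivity. Qed.

Lemma sub_eq0 (x y : A) : x ⊖ y = O -> x = y.
Proof. intro H. apply (add_cancel_r _ _ (⊖ y)). rewrite H, aadd_opp. reflexivity. Qed.

Lemma oppK (x : A) : ⊖ (⊖ x) = x.
Proof. symmetry. apply opp_unique. apply aadd_opp. Qed.

Lemma opp0 : ⊖ O = O.
Proof. symmetry; apply opp_unique. apply aadd_0. Qed.

Lemma oppD (x y : A) : ⊖ (x ⊕ y) = ⊖ x ⊕ ⊖ y.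
Proof.
  symmetry; apply opp_unique.
  rewrite addA, (addAC (⊖ x) (⊖ y) x), addNl, add0l, addNl. reflexivity.
Qed.

Lemma smul0 (x : A) : 0 ⋅ x = O.
Proof.
  apply (add_cancel_l _ _ (0 ⋅ x)). rewrite aadd_0, <- asmul_addl, RtoC_add, Rplus_0_l.
  reflexivity.
Qed.
Lemma smulx0 (s : Cx) : asmul s (@a0 A) = O.
Proof.
  apply (add_cancel_l _ _ (asmul s O)). rewrite aadd_0, <- asmul_addr, aadd_0.
  reflexivity.
Qed.
Lemma smul1 (x : A) : 1 ⋅ x = x.
Proof. apply asmul_1. Qed.
Lemma smulN1 (x : A) : (-1) ⋅ x = ⊖ x.
Proof.
  apply opp_unique. rewrite <- (smul1 x) at 2. rewrite <- asmul_addl, RtoC_add.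
  replace (-1 + 1) with 0 by ring. apply smul0.
Qed.
Lemma smulA (r s : R) (x : A) : r ⋅ (s ⋅ x) = (r * s) ⋅ x.
Proof. rewrite asmul_assoc, RtoC_mul. reflexivity. Qed.
Lemma smulDl (r s : R) (x : A) : (r + s) ⋅ x = r ⋅ x ⊕ s ⋅ x.
Proof. rewrite <- asmul_addl, RtoC_add. reflexivity. Qed.
Lemma smulDr (r : R) (x y : A) : r ⋅ (x ⊕ y) = r ⋅ x ⊕ r ⋅ y.
Proof. apply asmul_addr. Qed.
Lemma smul_opp (s : Cx) (x : A) : asmul s (⊖ x) = ⊖ asmul s x.
Proof.
  apply opp_unique. rewrite <- asmul_addr, addNl. apply smulx0.
Qed.
Lemma smulN (r : R) (x : A) : (- r) ⋅ x = ⊖ (r ⋅ x).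
Proof.
  rewrite <- smulN1, smulA. f_equal. f_equal. ring.
Qed.
Lemma smulBl (r s : R) (x : A) : (r - s) ⋅ x = r ⋅ x ⊖ s ⋅ x.
Proof. unfold Rminus. rewrite smulDl, smulN. reflexivity. Qed.

Lemma mul0l (x : A) : O ⊗ x = O.
Proof.
  apply (add_cancel_l _ _ (O ⊗ x)). rewrite aadd_0, <- amul_addl, aadd_0. reflexivity.
Qed.
Lemma mul0r (x : A) : x ⊗ O = O.
Proof.
  apply (add_cancel_l _ _ (x ⊗ O)). rewrite aadd_0, <- amul_addr, aadd_0. reflexivity.
Qed.
Lemma mulNl (x y : A) : (⊖ x) ⊗ y = ⊖ (x ⊗ y).
Proof. apply opp_unique. rewrite <- amul_addl, addNl. apply mul0l. Qed.
Lemma mulNr (x y : A) : x ⊗ (⊖ y) = ⊖ (x ⊗ y).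
Proof. apply opp_unique. rewrite <- amul_addr, addNl. apply mul0r. Qed.
Lemma mulA (x y z : A) : x ⊗ (y ⊗ z) = x ⊗ y ⊗ z.
Proof. apply amul_assoc. Qed.
Lemma mulDl (x y z : A) : (x ⊕ y) ⊗ z = x ⊗ z ⊕ y ⊗ z.
Proof. apply amul_addl. Qed.
Lemma mulDr (x y z : A) : x ⊗ (y ⊕ z) = x ⊗ y ⊕ x ⊗ z.
Proof. apply amul_addr. Qed.
Lemma mulBl (x y z : A) : (x ⊖ y) ⊗ z = x ⊗ z ⊖ y ⊗ z.
Proof. rewrite mulDl, mulNl. reflexivity. Qed.
Lemma mulBr (x y z : A) : x ⊗ (y ⊖ z) = x ⊗ y ⊖ x ⊗ z.
Proof. rewrite mulDr, mulNr. reflexivity. Qed.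
Lemma mul1l (x : A) : I ⊗ x = x.
Proof. apply amul_1l. Qed.
Lemma mul1r (x : A) : x ⊗ I = x.
Proof. apply amul_1r. Qed.
Lemma mulsl (r : R) (x y : A) : (r ⋅ x) ⊗ y = r ⋅ (x ⊗ y).
Proof. apply amul_smull. Qed.
Lemma mulsr (r : R) (x y : A) : x ⊗ (r ⋅ y) = r ⋅ (x ⊗ y).
Proof. apply amul_smulr. Qed.

Lemma star0 : astar (@a0 A) = O.
Proof.
  rewrite <- (smul0 O) at 1. rewrite astar_smul, RtoC_conj. apply smul0.
Qed.
Lemma star1 : astar (@a1 A) = I.
Proof.
  assert (H : astar (@a1 A) = astar I ⊗ I) by (rewrite mul1r; reflexivity).
  assert (H2 : astar (astar (@a1 A)) = astar I).
  { rewrite H at 1. rewrite astar_mul, astar_invol. apply mul1r. }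
  rewrite astar_invol in H2. symmetry; exact H2.
Qed.
Lemma starK (x : A) : astar (astar x) = x.
Proof. apply astar_invol. Qed.
Lemma starD (x y : A) : astar (x ⊕ y) = astar x ⊕ astar y.
Proof. apply astar_add. Qed.
Lemma starN (x : A) : astar (⊖ x) = ⊖ astar x.
Proof. rewrite <- !smulN1, astar_smul, RtoC_conj. reflexivity. Qed.
Lemma starM (x y : A) : astar (x ⊗ y) = astar y ⊗ astar x.
Proof. apply astar_mul. Qed.
Lemma stars (r : R) (x : A) : astar (r ⋅ x) = r ⋅ astar x.
Proof. rewrite astar_smul, RtoC_conj. reflexivity. Qed.

End Basics.

Ltac aexpand :=
  repeat progress (rewrite ?amul_addl, ?amul_addr, ?amul_smull, ?amul_smulr, ?mulNl, ?mulNr,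
                           ?mul0l, ?mul0r, ?amul_1l, ?amul_1r, ?amul_assoc).

Section Norms.
Context {A : CStarAlgebra}.
Local Notation "x ⊕ y" := (@aadd A x y) (at level 50, left associativity).
Local Notation "x ⊗ y" := (@amul A x y) (at level 40, left associativity).
Local Notation "r ⋅ x" := (@asmul A (RtoC r) x) (at level 40, no associativity).
Local Notation "⊖ x" := (@aopp A x) (at level 35).
Local Notation "x ⊖ y" := (@aadd A x (@aopp A y)) (at level 50, left associativity).
Local Notation "'O'" := (@a0 A).
Local Notation "'I'" := (@a1 A).
Local Notation nm := (@anorm A).

Lemma Cmod_RtoC r : Cmod (RtoC r) = Rabs r.
Proof.
  unfold Cmod; simpl. replace (r * r + 0 * 0) with (Rsqr r) by (unfold Rsqr; ring).
  apply sqrt_Rsqr_abs.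
Qed.
Lemma norm_smul r (x : A) : (nm (r ⋅ x)) = Rabs r * (nm (x)).
Proof. rewrite anorm_smul, Cmod_RtoC. reflexivity. Qed.
Lemma norm_ge0 (x : A) : 0 <= (nm (x)).
Proof. apply anorm_nonneg. Qed.
Lemma norm0 : (nm (O)) = 0.
Proof. rewrite <- (smul0 O), norm_smul, Rabs_R0. ring. Qed.
Lemma normN (x : A) : (nm (⊖ x)) = (nm (x)).
Proof. rewrite <- smulN1, norm_smul. rewrite (Rabs_left (-1)) by lra. ring. Qed.
Lemma norm_sub_sym (x y : A) : (nm (x ⊖ y)) = (nm (y ⊖ x)).
Proof. rewrite <- normN, oppD, oppK, addC. reflexivity. Qed.
Lemma norm_tri (x y : A) : (nm (x ⊕ y)) <= (nm (x)) + (nm (y)).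
Proof. apply anorm_triangle. Qed.
Lemma norm_sub3 (x y z : A) : (nm (x ⊖ z)) <= (nm (x ⊖ y)) + (nm (y ⊖ z)).
Proof.
  replace (x ⊖ z) with ((x ⊖ y) ⊕ (y ⊖ z)). apply norm_tri.
  rewrite addA, <- (addA x), addNl, aadd_0. reflexivity.
Qed.
Lemma norm_mul (x y : A) : (nm (x ⊗ y)) <= (nm (x)) * (nm (y)).
Proof. apply anorm_mul. Qed.
Lemma norm_eq0 (x : A) : (nm (x)) = 0 -> x = O.
Proof. apply anorm_eq0. Qed.

Lemma norm_star_le (x : A) : (nm (x)) <= (nm (astar x)).
Proof.
  destruct (Req_dec ((nm (x))) 0) as [H|H].
  - rewrite H; apply norm_ge0.
  - assert (Hp : 0 < (nm (x))) by (pose proof (norm_ge0 x); lra).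
    pose proof (anorm_cstar _ x) as Hc. pose proof (norm_mul (astar x) x) as Hm.
    rewrite Hc in Hm. apply Rmult_le_reg_r with ((nm (x))); auto.
Qed.
Lemma norm_star (x : A) : (nm (astar x)) = (nm (x)).
Proof.
  apply Rle_antisym. rewrite <- (starK x) at 2. apply norm_star_le. apply norm_star_le.
Qed.
Lemma norm_cstar (x : A) : (nm (astar x ⊗ x)) = (nm (x)) * (nm (x)).
Proof. apply anorm_cstar. Qed.
Lemma norm_sa_sq (x : A) : astar x = x -> (nm (x ⊗ x)) = (nm (x)) * (nm (x)).
Proof. intro H. rewrite <- H at 1. apply norm_cstar. Qed.
Lemma norm_cstar' (x : A) : (nm (x ⊗ astar x)) = (nm (x)) * (nm (x)).
Proof. rewrite <- (starK x) at 1. rewrite norm_cstar, norm_star. reflexivity. Qed.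

Lemma norm1_le : (nm (I)) <= 1.
Proof.
  pose proof (norm_cstar I) as H. rewrite star1, mul1l in H.
  pose proof (norm_ge0 I). nra.
Qed.

Lemma norm_scal r : (nm (r ⋅ I)) <= Rabs r.
Proof.
  rewrite norm_smul. pose proof norm1_le. pose proof (Rabs_pos r). nra.
Qed.

Definition conv (u : nat -> A) (l : A) : Prop :=
  forall eps, 0 < eps -> exists N, forall n, (N <= n)%nat -> (nm (u n ⊖ l)) < eps.

Lemma conv_unique u l l' : conv u l -> conv u l' -> l = l'.
Proof.
  intros H1 H2. apply sub_eq0. apply norm_eq0.
  apply Rle_antisym; [|apply norm_ge0].
  apply Rnot_lt_le; intro Hp.
  destruct (H1 ((nm (l ⊖ l')) / 2)) as [N1 HN1]; [lra|].
  destruct (H2 ((nm (l ⊖ l')) / 2)) as [N2 HN2]; [lra|].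
  specialize (HN1 (N1 + N2)%nat ltac:(lia)). specialize (HN2 (N1 + N2)%nat ltac:(lia)).
  pose proof (norm_sub3 l (u (N1+N2)%nat) l'). rewrite (norm_sub_sym l (u (N1+N2)%nat)) in H. lra.
Qed.

Lemma conv_const c : conv (fun _ => c) c.
Proof. intros e He. exists 0%nat. intros. rewrite aadd_opp, norm0. exact He. Qed.

Lemma conv_shift u l : conv u l -> conv (fun n => u (S n)) l.
Proof. intros H e He. destruct (H e He) as [N HN]. exists N. intros n Hn. apply HN. lia. Qed.

Lemma conv_le u l (f : nat -> R) (g : nat -> R) :
  (forall n, (nm (u n ⊖ l)) <= f n) -> (forall e, 0 < e -> exists N, forall n, (N <= n)%nat -> f n < e) ->
  conv u l.
Proof.
  intros H1 H2 e He. destruct (H2 e He) as [N HN]. exists N. intros n Hn.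
  eapply Rle_lt_trans. apply H1. apply HN; auto.
Qed.

Lemma conv_add u v l k : conv u l -> conv v k -> conv (fun n => u n ⊕ v n) (l ⊕ k).
Proof.
  intros H1 H2 e He.
  destruct (H1 (e/2)) as [N1 HN1]; [lra|]. destruct (H2 (e/2)) as [N2 HN2]; [lra|].
  exists (N1 + N2)%nat. intros n Hn.
  replace (u n ⊕ v n ⊖ (l ⊕ k)) with ((u n ⊖ l) ⊕ (v n ⊖ k)).
  - eapply Rle_lt_trans. apply norm_tri.
    specialize (HN1 n ltac:(lia)). specialize (HN2 n ltac:(lia)). lra.
  - rewrite oppD. agroup.
Qed.

Lemma conv_smul u l r : conv u l -> conv (fun n => r ⋅ u n) (r ⋅ l).
Proof.
  intros H e He.
  destruct (H (e / (Rabs r + 1))) as [N HN].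
  { apply Rdiv_lt_0_compat; auto. pose proof (Rabs_pos r); lra. }
  exists N. intros n Hn. replace (r ⋅ u n ⊖ r ⋅ l) with (r ⋅ (u n ⊖ l)) by agroup. rewrite norm_smul.
  specialize (HN n Hn). pose proof (Rabs_pos r).
  apply Rle_lt_trans with ((Rabs r + 1) * (nm (u n ⊖ l))).
  { pose proof (norm_ge0 (u n ⊖ l)). nra. }
  apply Rmult_lt_compat_l with (r := Rabs r + 1) in HN; [|lra].
  replace ((Rabs r + 1) * (e / (Rabs r + 1))) with e in HN by (field; lra). exact HN.
Qed.

Lemma conv_opp u l : conv u l -> conv (fun n => ⊖ u n) (⊖ l).
Proof.
  intros H. rewrite <- smulN1. 
  assert (E : (fun n => ⊖ u n) = (fun n => (-1) ⋅ u n)).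
  { apply FunctionalExtensionality.functional_extensionality. intro; rewrite smulN1; reflexivity. }
  rewrite E. apply conv_smul; auto.
Qed.

Lemma conv_star u l : conv u l -> conv (fun n => astar (u n)) (astar l).
Proof.
  intros H e He. destruct (H e He) as [N HN]. exists N. intros n Hn.
  rewrite <- starN, <- starD, norm_star. apply HN; auto.
Qed.

Lemma conv_mull c u l : conv u l -> conv (fun n => c ⊗ u n) (c ⊗ l).
Proof.
  intros H e He.
  destruct (H (e / ((nm (c)) + 1))) as [N HN].
  { apply Rdiv_lt_0_compat; auto. pose proof (norm_ge0 c); lra. }
  exists N. intros n Hn. rewrite <- mulBr.
  specialize (HN n Hn). pose proof (norm_ge0 c).
  eapply Rle_lt_trans. apply norm_mul.
  apply Rle_lt_trans with (((nm (c)) + 1) * (nm (u n ⊖ l))).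
  { pose proof (norm_ge0 (u n ⊖ l)). nra. }
  apply Rmult_lt_compat_l with (r := (nm (c)) + 1) in HN; [|lra].
  replace (((nm (c)) + 1) * (e / ((nm (c)) + 1))) with e in HN by (field; lra). exact HN.
Qed.

Lemma conv_mulr c u l : conv u l -> conv (fun n => u n ⊗ c) (l ⊗ c).
Proof.
  intros H e He.
  destruct (H (e / ((nm (c)) + 1))) as [N HN].
  { apply Rdiv_lt_0_compat; auto. pose proof (norm_ge0 c); lra. }
  exists N. intros n Hn. rewrite <- mulBl.
  specialize (HN n Hn). pose proof (norm_ge0 c).
  eapply Rle_lt_trans. apply norm_mul.
  apply Rle_lt_trans with (((nm (c)) + 1) * (nm (u n ⊖ l))).
  { pose proof (norm_ge0 (u n ⊖ l)). nra. }
  apply Rmult_lt_compat_l with (r := (nm (c)) + 1) in HN; [|lra].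
  replace (((nm (c)) + 1) * (e / ((nm (c)) + 1))) with e in HN by (field; lra). exact HN.
Qed.

Lemma conv_mul u v l k B : (forall n, (nm (v n)) <= B) -> conv u l -> conv v k ->
  conv (fun n => u n ⊗ v n) (l ⊗ k).
Proof.
  intros HB H1 H2.
  assert (E : forall n, u n ⊗ v n ⊖ l ⊗ k = (u n ⊖ l) ⊗ v n ⊕ l ⊗ (v n ⊖ k)).
  { intro n. rewrite mulBl, mulBr, addA. f_equal.
    rewrite <- (addA (u n ⊗ v n)), addNl, aadd_0. reflexivity. }
  assert (HB0 : 0 <= B) by (eapply Rle_trans; [apply norm_ge0|apply (HB 0%nat)]).
  intros e He.
  destruct (H1 (e / 2 / (B + 1))) as [N1 HN1].
  { apply Rdiv_lt_0_compat; lra. }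
  destruct (H2 (e / 2 / ((nm (l)) + 1))) as [N2 HN2].
  { apply Rdiv_lt_0_compat; pose proof (norm_ge0 l); lra. }
  exists (N1 + N2)%nat. intros n Hn. rewrite E.
  specialize (HN1 n ltac:(lia)). specialize (HN2 n ltac:(lia)).
  eapply Rle_lt_trans. apply norm_tri.
  pose proof (norm_mul (u n ⊖ l) (v n)). pose proof (norm_mul l (v n ⊖ k)).
  pose proof (HB n). pose proof (norm_ge0 l). pose proof (norm_ge0 (u n ⊖ l)).
  pose proof (norm_ge0 (v n ⊖ k)). pose proof (norm_ge0 (v n)).
  assert (X1 : (nm (u n ⊖ l)) * (nm (v n)) < e / 2).
  { apply Rle_lt_trans with ((nm (u n ⊖ l)) * (B + 1)). nra.
    apply Rmult_lt_compat_r with (r := B + 1) in HN1; [|lra].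
    replace (e / 2 / (B + 1) * (B + 1)) with (e/2) in HN1 by (field; lra). lra. }
  assert (X2 : (nm (l)) * (nm (v n ⊖ k)) < e / 2).
  { apply Rle_lt_trans with (((nm (l)) + 1) * (nm (v n ⊖ k))). nra.
    apply Rmult_lt_compat_l with (r := (nm (l)) + 1) in HN2; [|lra].
    replace (((nm (l)) + 1) * (e / 2 / ((nm (l)) + 1))) with (e/2) in HN2 by (field; lra). lra. }
  lra.
Qed.

Lemma conv_norm_le u l B : (forall n, (nm (u n)) <= B) -> conv u l -> (nm (l)) <= B.
Proof.
  intros HB H. apply Rnot_lt_le. intro Hlt.
  destruct (H ((nm (l)) - B)) as [N HN]; [lra|].
  specialize (HN N (le_n _)). pose proof (norm_sub3 l (u N) O).
  rewrite opp0, !aadd_0 in H0. rewrite norm_sub_sym in HN. specialize (HB N). lra.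
Qed.

Lemma cauchy_dom (u : nat -> A) (q : nat -> R) (M : R) :
  (forall n, (nm (u (S n) ⊖ u n)) <= q (S n) - q n) -> (forall n, q n <= M) ->
  exists l, conv u l.
Proof.
  intros Hd HM.
  assert (Hg : Un_growing q).
  { intro n. pose proof (Hd n). pose proof (norm_ge0 (u (S n) ⊖ u n)). lra. }
  assert (Hb : bound (EUn q)).
  { exists M. intros x [n ->]. apply HM. }
  destruct (growing_cv q Hg Hb) as [lq Hlq].
  assert (Hc := CV_Cauchy q (exist _ lq Hlq)).
  assert (Hmn : forall n k, (nm (u (k + n)%nat ⊖ u n)) <= q (k + n)%nat - q n).
  { intros n k. induction k.
    - simpl. rewrite aadd_opp, norm0. lra.
    - simpl. eapply Rle_trans. apply (norm_sub3 _ (u (k + n)%nat)).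
      pose proof (Hd (k + n)%nat). lra. }
  destruct (acomplete _ u) as [l Hl].
  - intros e He. destruct (Hc e He) as [N HN]. exists N. intros m n Hm Hn.
    destruct (Nat.le_ge_cases n m) as [Hle|Hle].
    + replace m with ((m - n) + n)%nat by lia.
      eapply Rle_lt_trans. apply Hmn.
      specialize (HN ((m - n) + n)%nat n ltac:(lia) Hn). unfold R_dist in HN.
      eapply Rle_lt_trans; [apply Rle_abs|exact HN].
    + rewrite norm_sub_sym. replace n with ((n - m) + m)%nat by lia.
      eapply Rle_lt_trans. apply Hmn.
      specialize (HN ((n - m) + m)%nat m ltac:(lia) Hm). unfold R_dist in HN.
      eapply Rle_lt_trans; [apply Rle_abs|exact HN].
  - exists l. exact Hl.
Qed.

End Norms.

Section Subalg.
Context {A : CStarAlgebra}.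
Local Notation "x ⊕ y" := (@aadd A x y) (at level 50, left associativity).
Local Notation "x ⊗ y" := (@amul A x y) (at level 40, left associativity).
Local Notation "r ⋅ x" := (@asmul A (RtoC r) x) (at level 40, no associativity).
Local Notation "⊖ x" := (@aopp A x) (at level 35).
Local Notation "x ⊖ y" := (@aadd A x (@aopp A y)) (at level 50, left associativity).
Local Notation "'O'" := (@a0 A).
Local Notation "'I'" := (@a1 A).
Local Notation nm := (@anorm A).

Lemma sub_one S : is_CStar_subalgebra A S -> S I.
Proof. intros [H _]. exact H. Qed.
Lemma sub_add S x y : is_CStar_subalgebra A S -> S x -> S y -> S (x ⊕ y).
Proof. intros (_ & H & _). apply H. Qed.
Lemma sub_smul S s x : is_CStar_subalgebra A S -> S x -> S (asmul s x).
Proof. intros (_ & _ & H & _). apply H. Qed.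
Lemma sub_mul S x y : is_CStar_subalgebra A S -> S x -> S y -> S (x ⊗ y).
Proof. intros (_ & _ & _ & H & _). apply H. Qed.
Lemma sub_star S x : is_CStar_subalgebra A S -> S x -> S (astar x).
Proof. intros (_ & _ & _ & _ & H & _). apply H. Qed.
Lemma sub_lim S u l : is_CStar_subalgebra A S -> (forall n, S (u n)) -> conv u l -> S l.
Proof. intros (_ & _ & _ & _ & _ & H) Hu Hl. exact (H u l Hu Hl). Qed.
Lemma sub_opp S x : is_CStar_subalgebra A S -> S x -> S (⊖ x).
Proof. intros H Hx. rewrite <- smulN1. exact (sub_smul S _ x H Hx). Qed.
Lemma sub_zero S : is_CStar_subalgebra A S -> S O.
Proof. intros H. rewrite <- (smul0 I). exact (sub_smul S _ _ H (sub_one S H)). Qed.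

Lemma gen_sub a : is_CStar_subalgebra A (Cstar_gen A a).
Proof.
  unfold Cstar_gen. split; [|split; [|split; [|split; [|split]]]].
  - intros S HS _. exact (sub_one S HS).
  - intros x y Hx Hy S HS Ha. exact (sub_add S x y HS (Hx S HS Ha) (Hy S HS Ha)).
  - intros s x Hx S HS Ha. exact (sub_smul S s x HS (Hx S HS Ha)).
  - intros x y Hx Hy S HS Ha. exact (sub_mul S x y HS (Hx S HS Ha) (Hy S HS Ha)).
  - intros x Hx S HS Ha. exact (sub_star S x HS (Hx S HS Ha)).
  - intros u l Hu Hl S HS Ha. apply (sub_lim S u l); auto. intro n. apply Hu; auto.
Qed.
Lemma gen_in a : Cstar_gen A a a.
Proof. intros S _ H. exact H. Qed.
Lemma gen_min a S x : is_CStar_subalgebra A S -> S a -> Cstar_gen A a x -> S x.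
Proof. intros HS Ha Hx. apply Hx; auto. Qed.

Definition Comm (T : A -> Prop) : A -> Prop :=
  fun x => forall y, T y -> x ⊗ y = y ⊗ x /\ astar x ⊗ y = y ⊗ astar x.

Lemma conv_comm u l y : (forall n, u n ⊗ y = y ⊗ u n) -> conv u l -> l ⊗ y = y ⊗ l.
Proof.
  intros H Hl. apply (conv_unique (fun n => u n ⊗ y)).
  - apply conv_mulr; auto.
  - replace (fun n => u n ⊗ y) with (fun n => y ⊗ u n).
    apply conv_mull; auto. apply functional_extensionality; intro n; auto.
Qed.

Lemma comm_sub T : is_CStar_subalgebra A (Comm T).
Proof.
  unfold Comm. split; [|split; [|split; [|split; [|split]]]].
  - intros z _. rewrite star1, mul1l, mul1r; auto.
  - intros x y Hx Hy z Hz. destruct (Hx z Hz), (Hy z Hz). split.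
    + rewrite mulDl, mulDr. congruence.
    + rewrite starD, mulDl, mulDr. congruence.
  - intros s x Hx z Hz. destruct (Hx z Hz). split.
    + rewrite amul_smull, amul_smulr. congruence.
    + rewrite astar_smul, amul_smull, amul_smulr. congruence.
  - intros x y Hx Hy z Hz. destruct (Hx z Hz) as [E1 E2], (Hy z Hz) as [E3 E4]. split.
    + rewrite <- mulA, E3, !mulA, E1. reflexivity.
    + rewrite starM, <- mulA, E2, !mulA, E4. reflexivity.
  - intros x Hx z Hz. destruct (Hx z Hz). rewrite starK. auto.
  - intros u l Hu Hl z Hz. split.
    + apply (conv_comm u l z); auto. intro n. apply (Hu n z Hz).
    + apply (conv_comm (fun n => astar (u n)) (astar l) z); auto.
      intro n. apply (Hu n z Hz). apply conv_star; auto.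
Qed.

Lemma gen_comm h : astar h = h -> in_CA A (Cstar_gen A h).
Proof.
  intro Hh. split. apply gen_sub.
  assert (S1 : forall x, Cstar_gen A h x -> Comm (fun y => y = h) x).
  { intros x Hx. apply (gen_min h); auto. apply comm_sub.
    intros y ->. rewrite Hh. auto. }
  assert (S2 : forall x, Cstar_gen A h x -> Comm (Cstar_gen A h) x).
  { intros x Hx. apply (gen_min h); auto. apply comm_sub.
    intros y Hy. destruct (S1 y Hy h eq_refl) as [E1 E2]. rewrite Hh. auto. }
  intros x y Hx Hy. apply (S2 x Hx y Hy).
Qed.

Lemma gen_le a C : is_CStar_subalgebra A C -> C a -> forall x, Cstar_gen A a x -> C x.
Proof. intros HC Ha x Hx. apply Hx; auto. Qed.

End Subalg.

Section Sqrt.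
Context {A : CStarAlgebra}.
Local Notation "x ⊕ y" := (@aadd A x y) (at level 50, left associativity).
Local Notation "x ⊗ y" := (@amul A x y) (at level 40, left associativity).
Local Notation "r ⋅ x" := (@asmul A (RtoC r) x) (at level 40, no associativity).
Local Notation "⊖ x" := (@aopp A x) (at level 35).
Local Notation "x ⊖ y" := (@aadd A x (@aopp A y)) (at level 50, left associativity).
Local Notation "'O'" := (@a0 A).
Local Notation "'I'" := (@a1 A).
Local Notation nm := (@anorm A).

Fixpoint sq_seq (x : A) (n : nat) : A :=
  match n with
  | Datatypes.O => a0
  | S k => (1/2) ⋅ (x ⊕ sq_seq x k ⊗ sq_seq x k)
  end.

Fixpoint ps (r : R) (n : nat) : R :=
  match n with
  | Datatypes.O => 0
  | S k => (r + ps r k * ps r k) / 2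
  end.

Lemma ps_bounds r n : 0 <= r <= 1 -> 0 <= ps r n <= 1.
Proof. intro Hr. induction n; simpl; nra. Qed.

Lemma ps_incr r n : 0 <= r <= 1 -> ps r n <= ps r (S n).
Proof.
  intro Hr. induction n; simpl. lra.
  simpl in IHn. pose proof (ps_bounds r n Hr). nra.
Qed.

Lemma sq_norm x n : nm x <= 1 -> nm (sq_seq x n) <= ps (nm x) n.
Proof.
  intro Hx. pose proof (norm_ge0 x) as H0.
  induction n; simpl. rewrite norm0; lra.
  rewrite norm_smul. rewrite Rabs_right by lra.
  pose proof (norm_tri x (sq_seq x n ⊗ sq_seq x n)).
  pose proof (norm_mul (sq_seq x n) (sq_seq x n)).
  pose proof (norm_ge0 (sq_seq x n)). nra.
Qed.

Lemma sq_diff x n : nm x <= 1 ->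
  nm (sq_seq x (S n) ⊖ sq_seq x n) <= ps (nm x) (S n) - ps (nm x) n.
Proof.
  intro Hx. pose proof (norm_ge0 x) as H0.
  induction n.
  - simpl. rewrite mul0l, opp0, !aadd_0, norm_smul, Rabs_right by lra. lra.
  - remember (sq_seq x (S n)) as y1. remember (sq_seq x n) as y0.
    assert (E : sq_seq x (S (S n)) ⊖ y1 =
                (1/2) ⋅ ((y1 ⊖ y0) ⊗ y1 ⊕ y0 ⊗ (y1 ⊖ y0))).
    { assert (E1 : sq_seq x (S (S n)) = (1/2) ⋅ (x ⊕ y1 ⊗ y1)) by (subst; reflexivity).
      assert (E2 : y1 = (1/2) ⋅ (x ⊕ y0 ⊗ y0)) by (subst; reflexivity).
      rewrite E1. rewrite E2 at 3. rewrite mulBl, mulBr. agroup. }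
    rewrite E, norm_smul, Rabs_right by lra.
    pose proof (norm_tri ((y1 ⊖ y0) ⊗ y1) (y0 ⊗ (y1 ⊖ y0))).
    pose proof (norm_mul (y1 ⊖ y0) y1). pose proof (norm_mul y0 (y1 ⊖ y0)).
    assert (N1 : nm y1 <= ps (nm x) (S n)) by (subst; apply sq_norm; auto).
    assert (N0 : nm y0 <= ps (nm x) n) by (subst; apply sq_norm; auto).
    pose proof (norm_ge0 y1). pose proof (norm_ge0 y0). pose proof (norm_ge0 (y1 ⊖ y0)).
    pose proof (ps_bounds (nm x) n ltac:(lra)). pose proof (ps_bounds (nm x) (S n) ltac:(lra)).
    pose proof (ps_incr (nm x) n ltac:(lra)).
    change (ps (nm x) (S (S n))) with ((nm x + ps (nm x) (S n) * ps (nm x) (S n)) / 2).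
    change (ps (nm x) (S n)) with ((nm x + ps (nm x) n * ps (nm x) n) / 2) at 2.
    set (p1 := ps (nm x) (S n)) in *. set (p0 := ps (nm x) n) in *.
    assert (D : nm (y1 ⊖ y0) <= p1 - p0) by (subst y1 y0; exact IHn).
    assert (p1 = (nm x + p0 * p0) / 2) by (unfold p1, p0; reflexivity).
    nra.
Qed.

Lemma sq_conv x : nm x <= 1 -> exists y, conv (sq_seq x) y.
Proof.
  intro Hx. apply (cauchy_dom _ (ps (nm x)) 1).
  - intro n. apply sq_diff; auto.
  - intro n. apply ps_bounds. split; auto. apply norm_ge0.
Qed.

Lemma sq_fix x y : nm x <= 1 -> conv (sq_seq x) y -> y = (1/2) ⋅ (x ⊕ y ⊗ y).
Proof.
  intros Hx Hy. apply (conv_unique (fun n => sq_seq x (S n))).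
  - apply conv_shift; auto.
  - simpl. apply conv_smul. apply conv_add. apply conv_const.
    apply (conv_mul _ _ _ _ 1); auto.
    intro n. eapply Rle_trans. apply sq_norm; auto. apply ps_bounds. split; auto. apply norm_ge0.
Qed.

Lemma sq_pres x y (P : A -> Prop) : conv (sq_seq x) y ->
  (forall u l, (forall n, P (u n)) -> conv u l -> P l) -> P O ->
  (forall z, P z -> P ((1/2) ⋅ (x ⊕ z ⊗ z))) -> P y.
Proof.
  intros Hy Hcl H0 Hs. apply (Hcl (sq_seq x)); auto.
  intro n; induction n; simpl; auto.
Qed.

Lemma sqrt1 x : nm x <= 1 -> exists g, g ⊗ g = I ⊖ x /\ nm (I ⊖ g) <= 1 /\
  (astar x = x -> astar g = g) /\ (forall z, x ⊗ z = z ⊗ x -> g ⊗ z = z ⊗ g) /\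
  (forall S, is_CStar_subalgebra A S -> S x -> S g).
Proof.
  intro Hx. destruct (sq_conv x Hx) as [y Hy].
  pose proof (sq_fix x y Hx Hy) as E.
  exists (I ⊖ y). split; [|split; [|split; [|split]]].
  - rewrite mulBl, !mulBr, !mul1l, !mul1r.
    assert (E' : forall w, y = (1/2) ⋅ (x ⊕ w) -> w = 2 ⋅ y ⊖ x).
    { intros w Hw'. rewrite Hw'. agroup. }
    rewrite (E' _ E). agroup.
  - replace (I ⊖ (I ⊖ y)) with y by agroup.
    apply (conv_norm_le (sq_seq x) y 1); auto.
    intro n. eapply Rle_trans. apply sq_norm; auto. apply ps_bounds. split; auto. apply norm_ge0.
  - intro Hs. assert (Hyy : astar y = y).
    { apply (sq_pres x y (fun z => astar z = z)); auto.
      - intros u l Hu Hl. apply (conv_unique u); auto.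
        replace u with (fun n => astar (u n)). apply conv_star; auto.
        apply functional_extensionality; auto.
      - apply star0.
      - intros z Hz. rewrite stars, starD, starM, Hs, Hz. reflexivity. }
    rewrite starD, starN, star1, Hyy. reflexivity.
  - intros z Hz. assert (Hyz : y ⊗ z = z ⊗ y).
    { apply (sq_pres x y (fun w => w ⊗ z = z ⊗ w)); auto.
      - intros u l Hu Hl. apply (conv_comm u); auto.
      - rewrite mul0l, mul0r; reflexivity.
      - intros w Hw. rewrite mulsl, mulsr, mulDl, mulDr, Hz. f_equal. f_equal.
        rewrite <- mulA, Hw, !mulA, Hw. reflexivity. }
    rewrite mulBl, mulBr, mul1l, mul1r, Hyz. reflexivity.
  - intros S HS HxS. assert (HyS : S y).
    { apply (sq_pres x y S); auto.
      - intros u l Hu Hl. exact (sub_lim S u l HS Hu Hl).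
      - exact (sub_zero S HS).
      - intros z Hz. apply (sub_smul S). auto. apply (sub_add S); auto. apply (sub_mul S); auto. }
    apply (sub_add S); auto. exact (sub_one S HS). apply (sub_opp S); auto.
Qed.

End Sqrt.

Section Pos.
Context {A : CStarAlgebra}.
Local Notation "x ⊕ y" := (@aadd A x y) (at level 50, left associativity).
Local Notation "x ⊗ y" := (@amul A x y) (at level 40, left associativity).
Local Notation "r ⋅ x" := (@asmul A (RtoC r) x) (at level 40, no associativity).
Local Notation "⊖ x" := (@aopp A x) (at level 35).
Local Notation "x ⊖ y" := (@aadd A x (@aopp A y)) (at level 50, left associativity).
Local Notation "'O'" := (@a0 A).
Local Notation "'I'" := (@a1 A).
Local Notation nm := (@anorm A).

Definition Pos (h : A) : Prop := astar h = h /\ exists t, 0 < t /\ nm (t ⋅ I ⊖ h) <= t.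

Lemma pos_sqrt h : Pos h -> exists g, Pos g /\ astar g = g /\ g ⊗ g = h /\
  (forall z, h ⊗ z = z ⊗ h -> g ⊗ z = z ⊗ g) /\
  (forall S, is_CStar_subalgebra A S -> S h -> S g).
Proof.
  intros [Hs [t [Ht Hn]]].
  set (x := (1/t) ⋅ (t ⋅ I ⊖ h)).
  assert (Hx : nm x <= 1).
  { unfold x. rewrite norm_smul, Rabs_right.
    apply Rmult_le_reg_l with t; auto. rewrite <- Rmult_assoc.
    replace (t * (1/t)) with 1 by (field; lra). lra.
    apply Rle_ge. apply Rlt_le. apply Rdiv_lt_0_compat; lra. }
  destruct (sqrt1 x Hx) as (q & Hqq & Hqn & Hqs & Hqc & HqS).
  exists (sqrt t ⋅ q).
  assert (Hst : 0 < sqrt t) by (apply sqrt_lt_R0; auto).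
  assert (Hqs' : astar q = q).
  { apply Hqs. unfold x. rewrite stars, starD, starN, stars, star1, Hs. reflexivity. }
  split; [|split; [|split; [|split]]].
  - split. rewrite stars, Hqs'. reflexivity.
    exists (sqrt t). split; auto.
    replace (sqrt t ⋅ I ⊖ sqrt t ⋅ q) with (sqrt t ⋅ (I ⊖ q)) by agroup.
    rewrite norm_smul, Rabs_right by lra. nra.
  - rewrite stars, Hqs'. reflexivity.
  - rewrite mulsl, mulsr, smulA, Hqq. unfold x.
    rewrite sqrt_sqrt by lra. agroup.
  - intros z Hz. rewrite mulsl, mulsr. f_equal. apply Hqc.
    unfold x. rewrite mulsl, mulsr, mulDl, mulDr, !mulsl, !mulsr, mulNl, mulNr, mul1l, mul1r, Hz.
    reflexivity.
  - intros S HS Hh. apply (sub_smul S); auto. apply HqS; auto.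
    unfold x. apply (sub_smul S); auto. apply (sub_add S); auto.
    apply (sub_smul S); auto. exact (sub_one S HS). apply (sub_opp S); auto.
Qed.

Lemma Ci_cancel (w : A) : asmul Ci w ⊕ asmul (Cconj Ci) w = O.
Proof.
  rewrite <- asmul_addl. replace (Cadd Ci (Cconj Ci)) with (RtoC 0). apply smul0.
  apply Cx_ext; simpl; ring.
Qed.

Lemma UL (p q : A) c : astar p = p -> astar q = q -> p ⊗ q = q ⊗ p ->
  p ⊗ p ⊕ q ⊗ q = c ⋅ I -> nm p * nm p <= Rabs c.
Proof.
  intros Hp Hq Hpq Hc.
  set (e := p ⊕ asmul Ci q).
  assert (Hes : astar e = p ⊕ asmul (Cconj Ci) q).
  { unfold e. rewrite starD, astar_smul, Hp, Hq. reflexivity. }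
  assert (Hee : astar e ⊗ e = c ⋅ I).
  { rewrite Hes. unfold e. rewrite !mulDl, !mulDr, !amul_smull, !amul_smulr, asmul_assoc.
    replace (Cmul (Cconj Ci) Ci) with (RtoC 1) by (apply Cx_ext; simpl; ring).
    rewrite smul1, <- Hc, Hpq.
    assert (E := Ci_cancel (q ⊗ p)).
    transitivity (p ⊗ p ⊕ q ⊗ q ⊕ (asmul Ci (q ⊗ p) ⊕ asmul (Cconj Ci) (q ⊗ p))).
    agroup. rewrite E. agroup. }
  assert (Hp2 : p = (1/2) ⋅ (e ⊕ astar e)).
  { rewrite Hes. unfold e. 
    transitivity ((1/2) ⋅ (2 ⋅ p ⊕ (asmul Ci q ⊕ asmul (Cconj Ci) q))).
    rewrite Ci_cancel. agroup. agroup. }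
  assert (Hn : nm e * nm e <= Rabs c).
  { rewrite <- norm_cstar, Hee. apply norm_scal. }
  assert (Hpn : nm p <= nm e).
  { rewrite Hp2, norm_smul, Rabs_right by lra.
    pose proof (norm_tri e (astar e)). rewrite norm_star in H. lra. }
  pose proof (norm_ge0 p). nra.
Qed.

Lemma sq_pos_t (g : A) t : astar g = g -> nm (g ⊗ g) <= t -> 0 < t ->
  nm (t ⋅ I ⊖ g ⊗ g) <= t.
Proof.
  intros Hg Hn Ht.
  assert (Hst : 0 < sqrt t) by (apply sqrt_lt_R0; auto).
  set (w := (1 / sqrt t) ⋅ g).
  assert (Hws : astar w = w) by (unfold w; rewrite stars, Hg; reflexivity).
  assert (Hww : w ⊗ w = (1/t) ⋅ (g ⊗ g)).
  { unfold w. rewrite mulsl, mulsr, smulA. f_equal. f_equal.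
    rewrite <- (sqrt_sqrt t) at 3 by lra. field. lra. }
  assert (Hwn : nm (w ⊗ w) <= 1).
  { rewrite Hww, norm_smul, Rabs_right. apply Rmult_le_reg_l with t; auto.
    rewrite <- Rmult_assoc. replace (t * (1/t)) with 1 by (field; lra). lra.
    apply Rle_ge, Rlt_le, Rdiv_lt_0_compat; lra. }
  destruct (sqrt1 (w ⊗ w) Hwn) as (q & Hqq & _ & Hqs & Hqc & _).
  assert (Hq : astar q = q) by (apply Hqs; rewrite starM, Hws; reflexivity).
  assert (Hqw : q ⊗ w = w ⊗ q) by (apply Hqc; rewrite mulA; reflexivity).
  pose proof (UL q w 1 Hq Hws Hqw) as HU.
  assert (HU' : nm q * nm q <= 1).
  { rewrite Rabs_R1 in HU. apply HU. rewrite Hqq. agroup. }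
  replace (t ⋅ I ⊖ g ⊗ g) with (t ⋅ (q ⊗ q)).
  - rewrite norm_smul, norm_sa_sq, Rabs_right by (auto; lra). nra.
  - rewrite Hqq. assert (E : g ⊗ g = t ⋅ (w ⊗ w)).
    { rewrite Hww, smulA. replace (t * (1/t)) with 1 by (field; lra). rewrite smul1; reflexivity. }
    rewrite E. agroup.
Qed.

Lemma pos_sq (g : A) : astar g = g -> Pos (g ⊗ g).
Proof.
  intro Hg. split. rewrite starM, Hg; reflexivity.
  exists (nm (g ⊗ g) + 1). pose proof (norm_ge0 (g ⊗ g)). split. lra.
  apply sq_pos_t; auto; lra.
Qed.

Lemma pos_all_t h t : Pos h -> nm h <= t -> 0 < t -> nm (t ⋅ I ⊖ h) <= t.
Proof.
  intros Hh Hn Ht. destruct (pos_sqrt h Hh) as (g & _ & Hg & Hgg & _).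
  rewrite <- Hgg in *. apply sq_pos_t; auto.
Qed.

Lemma pos_zero : Pos O.
Proof.
  split. apply star0. exists 1. split. lra. rewrite opp0, aadd_0, smul1. apply norm1_le.
Qed.

Lemma pos_add h k : Pos h -> Pos k -> Pos (h ⊕ k).
Proof.
  intros [Hh [s [Hs Hsn]]] [Hk [t [Ht Htn]]]. split. rewrite starD, Hh, Hk; reflexivity.
  exists (s + t). split. lra.
  replace ((s + t) ⋅ I ⊖ (h ⊕ k)) with ((s ⋅ I ⊖ h) ⊕ (t ⋅ I ⊖ k)) by agroup.
  eapply Rle_trans. apply norm_tri. lra.
Qed.

Lemma pos_scale h c : Pos h -> 0 <= c -> Pos (c ⋅ h).
Proof.
  intros [Hh [t [Ht Htn]]] Hc. destruct (Req_dec c 0) as [->|Hc0].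
  - rewrite smul0. apply pos_zero.
  - split. rewrite stars, Hh; reflexivity. exists (c * t). split. nra.
    replace ((c * t) ⋅ I ⊖ c ⋅ h) with (c ⋅ (t ⋅ I ⊖ h)) by agroup.
    rewrite norm_smul, Rabs_right by lra. nra.
Qed.

Lemma pos_antisym h : Pos h -> Pos (⊖ h) -> h = O.
Proof.
  intros Hh Hn.
  destruct (pos_sqrt h Hh) as (g & _ & Hg & Hgg & Hgc & _).
  destruct (pos_sqrt (⊖ h) Hn) as (k & _ & Hk & Hkk & Hkc & _).
  assert (Hkh : k ⊗ h = h ⊗ k).
  { assert (k ⊗ (⊖ h) = (⊖ h) ⊗ k). apply Hkc. rewrite mulNl, mulNr. reflexivity.
    rewrite mulNl, mulNr in H. rewrite <- (oppK (k ⊗ h)), H, oppK. reflexivity. }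
  assert (Hgk : g ⊗ k = k ⊗ g) by (apply Hgc; symmetry; exact Hkh).
  pose proof (UL g k 0 Hg Hk Hgk) as HU. rewrite Rabs_R0 in HU.
  assert (nm g * nm g <= 0). apply HU. rewrite Hgg, Hkk, smul0, aadd_opp. reflexivity.
  assert (nm g = 0) by (pose proof (norm_ge0 g); nra).
  rewrite <- Hgg, (norm_eq0 g H0), mul0l. reflexivity.
Qed.

Definition inv (x : A) : Prop := exists y, x ⊗ y = I /\ y ⊗ x = I.

Lemma inv_comm x y z : x ⊗ y = I -> y ⊗ x = I -> x ⊗ z = z ⊗ x -> y ⊗ z = z ⊗ y.
Proof.
  intros H1 H2 H3.
  transitivity (y ⊗ z ⊗ (x ⊗ y)). rewrite H1, mul1r; reflexivity.
  rewrite !mulA, <- (mulA y z x), <- H3, mulA, H2, mul1l. reflexivity.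
Qed.

Lemma inv_mul x y : inv x -> inv y -> inv (x ⊗ y).
Proof.
  intros [x' [H1 H2]] [y' [H3 H4]]. exists (y' ⊗ x'). split.
  - rewrite mulA, <- (mulA x y y'), H3, mul1r, H1. reflexivity.
  - rewrite mulA, <- (mulA y' x' x), H2, mul1r, H4. reflexivity.
Qed.

Lemma inv_factor x y : x ⊗ y = y ⊗ x -> inv (x ⊗ y) -> inv x.
Proof.
  intros Hc [w [H1 H2]]. exists (y ⊗ w). split.
  - rewrite mulA. exact H1.
  - assert (Hw : w ⊗ (x ⊗ y) = (x ⊗ y) ⊗ w) by (rewrite H1, H2; reflexivity).
    assert (Hwy : w ⊗ y = y ⊗ w).
    { apply (inv_comm (x ⊗ y) w y H1 H2). rewrite Hc at 1. rewrite mulA. reflexivity. }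
    rewrite <- Hwy, <- mulA, <- Hc. exact H2.
Qed.

Lemma inv_scale x c : inv x -> c <> 0 -> inv (c ⋅ x).
Proof.
  intros [y [H1 H2]] Hc. exists ((1/c) ⋅ y). split.
  - rewrite mulsl, mulsr, smulA, H1. replace (c * (1/c)) with 1 by (field; auto). apply smul1.
  - rewrite mulsl, mulsr, smulA, H2. replace (1/c * c) with 1 by (field; auto). apply smul1.
Qed.

Fixpoint neu (z : A) (n : nat) : A :=
  match n with
  | Datatypes.O => a0
  | S k => I ⊕ z ⊗ neu z k
  end.

Fixpoint qn (r : R) (n : nat) : R :=
  match n with
  | Datatypes.O => 0
  | S k => qn r k + r ^ k
  end.

Lemma neumann z : nm z < 1 -> inv (I ⊖ z).
Proof.
  intro Hz. pose proof (norm_ge0 z) as Hr0. set (r := nm z) in *.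
  assert (Hdiff : forall n, nm (neu z (S n) ⊖ neu z n) <= r ^ n).
  { intro n. assert (E : forall n, neu z (S (S n)) ⊖ neu z (S n) = z ⊗ (neu z (S n) ⊖ neu z n)).
    { intro k. change (neu z (S (S k))) with (I ⊕ z ⊗ neu z (S k)).
      change (neu z (S k)) with (I ⊕ z ⊗ neu z k) at 2. rewrite mulBr. agroup. }
    induction n.
    - simpl. rewrite mul0r, opp0, !aadd_0. pose proof (@norm1_le A). lra.
    - rewrite E. eapply Rle_trans. apply norm_mul. simpl. fold r.
      apply Rmult_le_compat_l; auto. }
  assert (Hq : forall n, qn r n = (1 - r ^ n) / (1 - r)).
  { intro n; induction n; simpl; [field; lra | rewrite IHn; field; lra]. }
  destruct (cauchy_dom (neu z) (qn r) (1 / (1 - r))) as [y Hy].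
  - intro n. simpl. replace (qn r n + r ^ n - qn r n) with (r ^ n) by ring. apply Hdiff.
  - intro n. rewrite Hq. apply Rmult_le_compat_r. apply Rlt_le, Rinv_0_lt_compat. lra.
    pose proof (pow_le r n Hr0). lra.
  - assert (Hfix : y = I ⊕ z ⊗ y).
    { apply (conv_unique (fun n => neu z (S n))). apply conv_shift; auto.
      simpl. apply conv_add. apply conv_const. apply conv_mull; auto. }
    assert (Hc : z ⊗ y = y ⊗ z).
    { symmetry. apply (conv_comm (neu z)); auto. intro n; induction n; simpl.
      rewrite mul0l, mul0r; reflexivity.
      rewrite mulDl, mulDr, mul1l, mul1r, <- mulA, IHn, mulA. reflexivity. }
    exists y. split.
    + rewrite mulBl, mul1l. rewrite Hfix at 1. agroup.
    + rewrite mulBr, mul1r, <- Hc. rewrite Hfix at 1. agroup.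
Qed.

Lemma pos_inv h l : Pos h -> 0 < l -> inv (h ⊕ l ⋅ I).
Proof.
  intros [Hh [t [Ht Htn]]] Hl.
  set (z := (1 / (t + l)) ⋅ (t ⋅ I ⊖ h)).
  assert (Hz : nm z < 1).
  { unfold z. rewrite norm_smul, Rabs_right.
    apply Rmult_lt_reg_l with (t + l). lra. rewrite <- Rmult_assoc.
    replace ((t + l) * (1 / (t + l))) with 1 by (field; lra). lra.
    apply Rle_ge, Rlt_le, Rdiv_lt_0_compat; lra. }
  replace (h ⊕ l ⋅ I) with ((t + l) ⋅ (I ⊖ z)).
  apply inv_scale. apply neumann; auto. lra.
  unfold z. agroup.
Qed.

End Pos.

Section FK.
Context {A : CStarAlgebra}.
Local Notation "x ⊕ y" := (@aadd A x y) (at level 50, left associativity).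
Local Notation "x ⊗ y" := (@amul A x y) (at level 40, left associativity).
Local Notation "r ⋅ x" := (@asmul A (RtoC r) x) (at level 40, no associativity).
Local Notation "⊖ x" := (@aopp A x) (at level 35).
Local Notation "x ⊖ y" := (@aadd A x (@aopp A y)) (at level 50, left associativity).
Local Notation "'O'" := (@a0 A).
Local Notation "'I'" := (@a1 A).
Local Notation nm := (@anorm A).

Lemma cm_I (a : A) : a ⊗ I = I ⊗ a.
Proof. rewrite mul1l, mul1r; reflexivity. Qed.
Lemma cm_O (a : A) : a ⊗ O = O ⊗ a.
Proof. rewrite mul0l, mul0r; reflexivity. Qed.
Lemma cm_add (a b c : A) : a ⊗ b = b ⊗ a -> a ⊗ c = c ⊗ a -> a ⊗ (b ⊕ c) = (b ⊕ c) ⊗ a.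
Proof. intros H1 H2. rewrite mulDl, mulDr, H1, H2; reflexivity. Qed.
Lemma cm_opp (a b : A) : a ⊗ b = b ⊗ a -> a ⊗ (⊖ b) = (⊖ b) ⊗ a.
Proof. intros H1. rewrite mulNl, mulNr, H1; reflexivity. Qed.
Lemma cm_sc (a b : A) s : a ⊗ b = b ⊗ a -> a ⊗ (asmul s b) = (asmul s b) ⊗ a.
Proof. intros H1. rewrite amul_smull, amul_smulr, H1; reflexivity. Qed.
Lemma cm_mul (a b c : A) : a ⊗ b = b ⊗ a -> a ⊗ c = c ⊗ a -> a ⊗ (b ⊗ c) = (b ⊗ c) ⊗ a.
Proof. intros H1 H2. rewrite mulA, H1, <- mulA, H2, mulA; reflexivity. Qed.
Lemma cm_sym (a b : A) : b ⊗ a = a ⊗ b -> a ⊗ b = b ⊗ a.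
Proof. intro H; symmetry; exact H. Qed.

Ltac cm_solve :=
  first [ reflexivity | assumption | (symmetry; assumption) | apply cm_I | apply cm_O
        | apply cm_add; cm_solve | apply cm_opp; cm_solve | apply cm_sc; cm_solve
        | apply cm_mul; cm_solve
        | (apply cm_sym; first [ apply cm_add; cm_solve | apply cm_opp; cm_solve
                               | apply cm_sc; cm_solve | apply cm_mul; cm_solve ]) ].

Lemma NI x : Pos x -> 0 < nm x -> inv (nm x ⋅ I ⊖ x) -> False.
Proof.
  intros Hx Ht Hinv. pose proof Hx as [Hxs _]. set (t := nm x) in *.
  destruct (pos_sqrt x Hx) as (g & _ & Hg & Hgg & _ & _).
  set (y := t ⋅ I ⊖ x).
  assert (Hys : astar y = y) by (unfold y; rewrite starD, starN, stars, star1, Hxs; reflexivity).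
  assert (Hyp : Pos y).
  { split; auto. exists t. split; auto. replace (t ⋅ I ⊖ y) with x by (unfold y; agroup). unfold t; lra. }
  assert (Hgy : g ⊗ y = y ⊗ g) by (unfold y; rewrite <- Hgg; cm_solve).
  destruct (pos_sqrt y Hyp) as (y0 & _ & Hy0 & Hy0y0 & Hy0c & _).
  assert (Hy0g : y0 ⊗ g = g ⊗ y0) by (apply Hy0c; symmetry; exact Hgy).
  destruct Hinv as [z [Hyz Hzy]]. fold y in Hyz, Hzy.
  assert (Hzs : astar z = z).
  { transitivity (astar z ⊗ (y ⊗ z)). rewrite Hyz, mul1r; reflexivity.
    rewrite mulA. rewrite <- Hys at 1. rewrite <- starM, Hyz, star1, mul1l. reflexivity. }
  assert (Hzg : z ⊗ g = g ⊗ z) by (apply (inv_comm y z g Hyz Hzy); symmetry; exact Hgy).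
  assert (Hzy0 : z ⊗ y0 = y0 ⊗ z) by (apply (inv_comm y z y0 Hyz Hzy); rewrite <- Hy0y0; cm_solve).
  assert (Hzpos : Pos z).
  { assert (E : (z ⊗ y0) ⊗ (z ⊗ y0) = z).
    { transitivity (z ⊗ z ⊗ (y0 ⊗ y0)).
      rewrite !mulA, <- (mulA z y0 z), <- Hzy0, mulA. reflexivity.
      rewrite Hy0y0, <- mulA, Hzy, mul1r. reflexivity. }
    rewrite <- E. apply pos_sq. rewrite starM, Hy0, Hzs. symmetry; exact Hzy0. }
  set (r := nm z + 1). assert (Hr : 0 < r) by (pose proof (norm_ge0 z); unfold r; lra).
  set (d := Rmin (1 / r) (t / 2)).
  assert (Hd : 0 < d) by (unfold d; apply Rmin_glb_lt; [apply Rdiv_lt_0_compat|]; lra).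
  assert (Hd1 : d <= 1 / r) by apply Rmin_l.
  assert (Hd2 : d <= t / 2) by apply Rmin_r.
  set (w := I ⊖ d ⋅ z).
  assert (Hwp : Pos w).
  { split. unfold w. rewrite starD, starN, stars, star1, Hzs; reflexivity.
    exists 1. split. lra. replace (1 ⋅ I ⊖ w) with (d ⋅ z) by (unfold w; agroup).
    rewrite norm_smul, Rabs_right by lra.
    assert (nm z < r) by (unfold r; lra).
    assert (d * r <= 1).
    { apply Rmult_le_reg_r with (/ r). apply Rinv_0_lt_compat; lra.
      replace (d * r * / r) with d by (field; lra). unfold Rdiv in Hd1. lra. }
    pose proof (norm_ge0 z). nra. }
  destruct (pos_sqrt w Hwp) as (q & _ & Hq & Hqq & Hqc & _).
  assert (Hqg : q ⊗ g = g ⊗ q) by (apply Hqc; unfold w; cm_solve).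
  assert (Hqy0 : q ⊗ y0 = y0 ⊗ q) by (apply Hqc; unfold w; cm_solve).
  set (p2 := q ⊗ y0).
  assert (Hp2s : astar p2 = p2) by (unfold p2; rewrite starM, Hq, Hy0; symmetry; exact Hqy0).
  assert (Hp2 : p2 ⊗ p2 = y ⊖ d ⋅ I).
  { unfold p2. transitivity ((q ⊗ q) ⊗ (y0 ⊗ y0)).
    rewrite !mulA, <- (mulA q y0 q), <- Hqy0, mulA. reflexivity.
    rewrite Hqq, Hy0y0. unfold w. rewrite mulBl, mul1l, mulsl, Hzy. reflexivity. }
  assert (Hgp : g ⊗ p2 = p2 ⊗ g) by (unfold p2; cm_solve).
  pose proof (UL g p2 (t - d) Hg Hp2s Hgp) as HU.
  assert (HU' : nm g * nm g <= Rabs (t - d)).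
  { apply HU. rewrite Hgg, Hp2. unfold y. agroup. }
  rewrite <- norm_sa_sq, Hgg in HU' by auto. fold t in HU'.
  rewrite Rabs_right in HU' by lra. lra.
Qed.

Lemma sig_inv (x y : A) l : l <> 0 -> inv (l ⋅ I ⊖ x ⊗ y) -> inv (l ⋅ I ⊖ y ⊗ x).
Proof.
  intros Hl [W [H1 H2]].
  exists ((1/l) ⋅ (I ⊕ y ⊗ W ⊗ x)).
  assert (C1 : (l ⋅ I ⊖ y ⊗ x) ⊗ (y ⊗ W ⊗ x) = y ⊗ x).
  { transitivity (y ⊗ ((l ⋅ I ⊖ x ⊗ y) ⊗ W) ⊗ x).
    aexpand. agroup. rewrite H1, mul1r. reflexivity. }
  assert (C2 : (y ⊗ W ⊗ x) ⊗ (l ⋅ I ⊖ y ⊗ x) = y ⊗ x).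
  { transitivity (y ⊗ (W ⊗ (l ⋅ I ⊖ x ⊗ y)) ⊗ x).
    aexpand. agroup. rewrite H2, mul1r. reflexivity. }
  split.
  - rewrite mulsr, mulDr, mul1r, C1. agroup.
  - rewrite mulsl, mulDl, mul1l, C2. agroup.
Qed.

Lemma dec h m : astar h = h -> Pos m -> m ⊗ m = h ⊗ h -> m ⊗ h = h ⊗ m ->
  let u := (1/2) ⋅ (m ⊕ h) in let v := (1/2) ⋅ (m ⊖ h) in
  u ⊗ v = O /\ v ⊗ u = O /\
  (forall l, 0 < l -> inv (u ⊕ l ⋅ I)) /\ (forall l, 0 < l -> inv (v ⊕ l ⋅ I)).
Proof.
  intros Hh Hm Hmm Hmh u v.
  assert (Huv : u ⊗ v = O).
  { unfold u, v. aexpand. rewrite Hmm, Hmh. agroup. }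
  assert (Hvu : v ⊗ u = O).
  { unfold u, v. aexpand. rewrite Hmm, Hmh. agroup. }
  assert (P1 : forall l, (u ⊕ l ⋅ I) ⊗ (v ⊕ l ⋅ I) = l ⋅ (m ⊕ l ⋅ I)).
  { intro l. aexpand. rewrite Huv. unfold u, v. agroup. }
  assert (P2 : forall l, (v ⊕ l ⋅ I) ⊗ (u ⊕ l ⋅ I) = l ⋅ (m ⊕ l ⋅ I)).
  { intro l. aexpand. rewrite Hvu. unfold u, v. agroup. }
  assert (Pi : forall l, 0 < l -> inv (l ⋅ (m ⊕ l ⋅ I))).
  { intros l Hl. apply inv_scale. apply pos_inv; auto. lra. }
  split; [|split; [|split]]; auto.
  - intros l Hl. apply (inv_factor _ (v ⊕ l ⋅ I)). rewrite P1, P2; reflexivity.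
    rewrite P1. apply Pi; auto.
  - intros l Hl. apply (inv_factor _ (u ⊕ l ⋅ I)). rewrite P1, P2; reflexivity.
    rewrite P2. apply Pi; auto.
Qed.

Lemma SP h : astar h = h -> (forall l, 0 < l -> inv (h ⊕ l ⋅ I)) -> Pos h.
Proof.
  intros Hh Hinv.
  destruct (pos_sqrt (h ⊗ h) (pos_sq h Hh)) as (m & Hm & Hms & Hmm & Hmc & _).
  assert (Hmh : m ⊗ h = h ⊗ m) by (apply Hmc; rewrite mulA; reflexivity).
  destruct (dec h m Hh Hm Hmm Hmh) as (Huv & Hvu & Hui & Hvi).
  set (u := (1/2) ⋅ (m ⊕ h)) in *. set (v := (1/2) ⋅ (m ⊖ h)) in *.
  assert (Hvs : astar v = v) by (unfold v; rewrite stars, starD, starN, Hms, Hh; reflexivity).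
  destruct (Req_dec (nm v) 0) as [H0|H0].
  - apply norm_eq0 in H0. replace h with (m ⊖ 2 ⋅ v).
    rewrite H0, smulx0, opp0, aadd_0. exact Hm. unfold v. agroup.
  - set (s := nm v) in *. assert (Hs : 0 < s) by (pose proof (norm_ge0 v); unfold s in *; lra).
    exfalso. apply (NI (v ⊗ v)). apply pos_sq; auto.
    rewrite norm_sa_sq by auto. fold s. nra.
    rewrite norm_sa_sq by auto. fold s.
    replace ((s * s) ⋅ I ⊖ v ⊗ v) with ((s ⋅ I ⊖ v) ⊗ (s ⋅ I ⊕ v)) by (aexpand; agroup).
    apply inv_mul; [|rewrite addC; apply Hvi; auto].
    destruct (Hinv s Hs) as [k [Hk1 Hk2]].
    assert (E1 : (s ⋅ I ⊖ v) ⊗ (I ⊕ (1/s) ⋅ u) = h ⊕ s ⋅ I).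
    { aexpand. rewrite Hvu. unfold u, v. agroup. }
    assert (E2 : (I ⊕ (1/s) ⋅ u) ⊗ (s ⋅ I ⊖ v) = h ⊕ s ⋅ I).
    { aexpand. rewrite Huv. unfold u, v. agroup. }
    assert (Hkc : k ⊗ (s ⋅ I ⊖ v) = (s ⋅ I ⊖ v) ⊗ k).
    { apply (inv_comm (h ⊕ s ⋅ I) k _ Hk1 Hk2). unfold v. cm_solve. }
    exists ((I ⊕ (1/s) ⋅ u) ⊗ k). split.
    + rewrite mulA, E1. exact Hk1.
    + rewrite <- mulA, Hkc, mulA, E2. exact Hk1.
Qed.

Lemma FK (b : A) : Pos (astar b ⊗ b).
Proof.
  set (a := astar b ⊗ b).
  assert (Ha : astar a = a) by (unfold a; rewrite starM, starK; reflexivity).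
  destruct (pos_sqrt (a ⊗ a) (pos_sq a Ha)) as (m & Hm & Hms & Hmm & Hmc & _).
  assert (Hma : m ⊗ a = a ⊗ m) by (apply Hmc; rewrite mulA; reflexivity).
  destruct (dec a m Ha Hm Hmm Hma) as (Huv & Hvu & Hui & Hvi).
  set (u := (1/2) ⋅ (m ⊕ a)) in *. set (v := (1/2) ⋅ (m ⊖ a)) in *.
  assert (Hvs : astar v = v) by (unfold v; rewrite stars, starD, starN, Hms, Ha; reflexivity).
  assert (Hauv : a = u ⊖ v) by (unfold u, v; agroup).
  assert (Hvp : Pos v) by (apply SP; auto).
  destruct (pos_sqrt v Hvp) as (w & _ & Hw & Hww & Hwc & _).
  assert (Hwv : w ⊗ v = v ⊗ w) by (apply Hwc; reflexivity).
  set (c := b ⊗ v).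
  assert (Hcc : astar c ⊗ c = ⊖ (v ⊗ v ⊗ v)).
  { transitivity (v ⊗ a ⊗ v).
    unfold c, a. rewrite starM, Hvs. rewrite !mulA. reflexivity.
    rewrite Hauv, mulBr, Hvu. aexpand. agroup. }
  set (p := w ⊗ v).
  assert (Hps : astar p = p) by (unfold p; rewrite starM, Hw, Hvs; symmetry; exact Hwv).
  assert (Hpp : p ⊗ p = v ⊗ v ⊗ v).
  { unfold p. rewrite !mulA, <- (mulA w v w), <- Hwv, mulA, Hww. reflexivity. }
  assert (Hncc : Pos (⊖ (astar c ⊗ c))) by (rewrite Hcc, oppK, <- Hpp; apply pos_sq; auto).
  assert (Hncc' : Pos (⊖ (c ⊗ astar c))).
  { apply SP. rewrite starN, starM, starK; reflexivity.
    intros l Hl. rewrite addC. apply sig_inv with (x := astar c). lra.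
    pose proof (pos_inv _ l Hncc Hl). rewrite addC in H. exact H. }
  set (h1 := c ⊕ astar c). set (d := c ⊖ astar c).
  set (k := asmul (mkC 0 (-1)) d).
  assert (Hh1 : astar h1 = h1) by (unfold h1; rewrite starD, starK; agroup).
  assert (Hk : astar k = k).
  { unfold k, d. rewrite astar_smul, starD, starN, starK.
    replace (Cconj (mkC 0 (-1))) with (Cmul (RtoC (-1)) (mkC 0 (-1))) by (apply Cx_ext; simpl; ring).
    rewrite <- asmul_assoc, smulN1, <- smul_opp. f_equal. agroup. }
  assert (Hkk : k ⊗ k = ⊖ (d ⊗ d)).
  { unfold k. rewrite amul_smull, amul_smulr, asmul_assoc.
    replace (Cmul (mkC 0 (-1)) (mkC 0 (-1))) with (RtoC (-1)) by (apply Cx_ext; simpl; ring).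
    apply smulN1. }
  assert (Hpcc : Pos (c ⊗ astar c)).
  { replace (c ⊗ astar c) with ((1/2) ⋅ (h1 ⊗ h1) ⊕ (1/2) ⋅ (k ⊗ k) ⊕ ⊖ (astar c ⊗ c)).
    apply pos_add; auto. apply pos_add; apply pos_scale; try lra; apply pos_sq; auto.
    rewrite Hkk. unfold h1, d. aexpand. agroup. }
  pose proof (pos_antisym _ Hpcc Hncc') as Hc0.
  assert (Hc : c = O).
  { apply norm_eq0. pose proof (norm_cstar' c). rewrite Hc0, norm0 in H.
    pose proof (norm_ge0 c). nra. }
  assert (Hp0 : p = O).
  { apply norm_eq0. pose proof (norm_sa_sq p Hps). rewrite Hpp, <- (oppK (v ⊗ v ⊗ v)), <- Hcc, Hc in H.
    rewrite mul0r, opp0, norm0 in H. pose proof (norm_ge0 p). nra. }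
  assert (Hv0 : v = O).
  { assert (Evv : v ⊗ v = O).
    { rewrite <- Hww at 1. rewrite <- mulA. fold p. rewrite Hp0, mul0r. reflexivity. }
    apply norm_eq0. pose proof (norm_sa_sq v Hvs). rewrite Evv, norm0 in H.
    pose proof (norm_ge0 v). nra. }
  replace a with m. exact Hm.
  rewrite Hauv. transitivity (u ⊕ v). unfold u, v; agroup. rewrite Hv0. agroup.
Qed.

End FK.

Section Main.
Context {A : CStarAlgebra}.
Local Notation "x ⊕ y" := (@aadd A x y) (at level 50, left associativity).
Local Notation "x ⊗ y" := (@amul A x y) (at level 40, left associativity).
Local Notation "r ⋅ x" := (@asmul A (RtoC r) x) (at level 40, no associativity).
Local Notation "⊖ x" := (@aopp A x) (at level 35).
Local Notation "x ⊖ y" := (@aadd A x (@aopp A y)) (at level 50, left associativity).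
Local Notation "'O'" := (@a0 A).
Local Notation "'I'" := (@a1 A).
Local Notation nm := (@anorm A).

Lemma positive_sa (a : A) : Defs.positive A a -> astar a = a.
Proof. intros [b ->]. rewrite starM, starK. reflexivity. Qed.

Lemma pos_in_gen (a : A) : Defs.positive A a ->
  in_CA A (Cstar_gen A a) /\ positive_in A (Cstar_gen A a) a /\ astar a = a.
Proof.
  intros Hp. pose proof (positive_sa a Hp) as Ha. destruct Hp as [b Hb].
  split; [apply gen_comm; auto|split; auto].
  assert (Hpos : Pos a) by (rewrite Hb; apply FK).
  destruct (pos_sqrt a Hpos) as (g & _ & Hg & Hgg & _ & HgS).
  exists g. split. apply HgS. apply gen_sub. apply gen_in.
  rewrite Hg. symmetry; exact Hgg.
Qed.

Lemma sub_of_gen C f : in_CA A C -> C f -> forall x, Cstar_gen A f x -> C x.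
Proof. intros [HC _] Hf x Hx. apply Hx; auto. Qed.

Lemma re_sa (a : A) : astar (re_part A a) = re_part A a.
Proof. unfold re_part. rewrite stars, starD, starK. agroup. Qed.

Lemma im_sa (a : A) : astar (im_part A a) = im_part A a.
Proof.
  unfold im_part. rewrite astar_smul, starD, starN, starK.
  replace (Cconj (mkC 0 (- / 2))) with (Cmul (RtoC (-1)) (mkC 0 (- / 2))) by (apply Cx_ext; simpl; ring).
  rewrite <- asmul_assoc, smulN1, <- smul_opp. f_equal. agroup.
Qed.

Lemma re_im_dec (a : A) : a = re_part A a ⊕ asmul Ci (im_part A a).
Proof.
  unfold re_part, im_part. rewrite asmul_assoc.
  replace (Cmul Ci (mkC 0 (- / 2))) with (RtoC (/ 2)) by (apply Cx_ext; simpl; field).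
  agroup.
Qed.

Lemma csub s1 s2 (q : A) : asmul s1 q ⊖ asmul s2 q = asmul (Cadd s1 (Cmul (RtoC (-1)) s2)) q.
Proof. rewrite asmul_addl, <- asmul_assoc, smulN1. reflexivity. Qed.

Lemma re_uniq (p q : A) : astar p = p -> astar q = q -> re_part A (p ⊕ asmul Ci q) = p.
Proof.
  intros Hp Hq. unfold re_part. rewrite starD, astar_smul, Hp, Hq.
  transitivity ((/ 2) ⋅ (2 ⋅ p ⊕ (asmul Ci q ⊕ asmul (Cconj Ci) q))).
  f_equal. agroup. rewrite Ci_cancel. agroup.
Qed.

Lemma im_uniq (p q : A) : astar p = p -> astar q = q -> im_part A (p ⊕ asmul Ci q) = q.
Proof.
  intros Hp Hq. unfold im_part. rewrite starD, astar_smul, Hp, Hq.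
  transitivity (asmul (mkC 0 (- / 2)) (asmul Ci q ⊖ asmul (Cconj Ci) q)).
  f_equal. agroup. rewrite csub, asmul_assoc.
  replace (Cmul (mkC 0 (- / 2)) (Cadd Ci (Cmul (RtoC (-1)) (Cconj Ci)))) with (RtoC 1)
    by (apply Cx_ext; simpl; field).
  apply smul1.
Qed.

Lemma re_of_sa (f : A) : astar f = f -> re_part A f = f.
Proof. intro Hf. unfold re_part. rewrite Hf. agroup. Qed.
Lemma im_of_sa (f : A) : astar f = f -> im_part A f = O.
Proof. intro Hf. unfold im_part. rewrite Hf, aadd_opp. apply smulx0. Qed.

Lemma re_in C (a : A) : is_CStar_subalgebra A C -> C a -> C (re_part A a).
Proof.
  intros HC Ha. unfold re_part. apply (sub_smul C); auto. apply (sub_add C); auto.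
  apply (sub_star C); auto.
Qed.
Lemma im_in C (a : A) : is_CStar_subalgebra A C -> C a -> C (im_part A a).
Proof.
  intros HC Ha. unfold im_part. apply (sub_smul C); auto. apply (sub_add C); auto.
  apply (sub_opp C); auto. apply (sub_star C); auto.
Qed.

Lemma qs_real rho (h : A) : quasi_state A rho -> astar h = h -> Im (rho h) = 0.
Proof.
  intros [[QL1 QL2] [QP Q1]] Hh.
  set (C := Cstar_gen A h).
  assert (HC : in_CA A C) by (apply gen_comm; auto).
  assert (HCs : is_CStar_subalgebra A C) by apply gen_sub.
  destruct (QL1 C HC) as [Hadd _].
  assert (Ch : C h) by apply gen_in.
  assert (C1 : C I) by exact (sub_one C HCs).
  assert (Chh : C (h ⊗ h)) by (apply (sub_mul C); auto).
  assert (E : (I ⊕ h) ⊗ (I ⊕ h) = (I ⊕ h) ⊕ (h ⊕ h ⊗ h)).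
  { rewrite mulDl, !mulDr, !mul1l, mul1r. reflexivity. }
  assert (P1 : Defs.positive A ((I ⊕ h) ⊗ (I ⊕ h))).
  { exists (I ⊕ h). rewrite starD, star1, Hh. reflexivity. }
  assert (P2 : Defs.positive A (h ⊗ h)) by (exists h; rewrite Hh; reflexivity).
  assert (P3 : Defs.positive A I) by (exists I; rewrite star1, mul1l; reflexivity).
  destruct (QP _ P1) as [I1 _]. destruct (QP _ P2) as [I2 _]. destruct (QP _ P3) as [I3 _].
  rewrite E, Hadd in I1 by (try apply (sub_add C); auto).
  rewrite (Hadd I h), (Hadd h (h ⊗ h)) in I1 by auto. simpl in I1. lra.
Qed.

Lemma part1 (rho : A -> Cx) : quasi_state A rho ->
  prob_integral_family A (restrict_qs A rho) /\
  (forall a : A, extend_pif A (restrict_qs A rho) a = rho a) /\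
  (faithful_qs A rho <-> faithful_pif A (restrict_qs A rho)).
Proof.
  intros Hq. pose proof Hq as [[QL1 QL2] [QP Q1]].
  split; [|split].
  - split.
    + intros C HC. destruct (QL1 C HC) as [Hadd Hsm]. unfold restrict_qs.
      split; [|split; [|split]].
      * intros f g Hf _ Hg _. rewrite Hadd by auto. reflexivity.
      * intros r f Hf _. rewrite Hsm by auto. simpl. ring.
      * intros f _ _ [g [_ Hg]]. apply (QP f). exists g; auto.
      * rewrite Q1. reflexivity.
    + intros C D _ _ _ f _ _. reflexivity.
  - intro a. unfold extend_pif, restrict_qs.
    rewrite (re_im_dec a) at 3. rewrite QL2 by (apply re_sa || apply im_sa).
    pose proof (qs_real rho _ Hq (re_sa a)). pose proof (qs_real rho _ Hq (im_sa a)).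
    apply Cx_ext; simpl; lra.
  - split.
    + intros Hf C HC f Hf1 Hf2 Hf3 Hz. apply Hf. destruct Hf3 as [g [_ Hg]]. exists g; auto.
      unfold restrict_qs in Hz. pose proof (qs_real rho f Hq Hf2).
      apply Cx_ext; simpl; auto.
    + intros Hf a Ha Hz. destruct (pos_in_gen a Ha) as (HC & Hpi & Hs).
      apply (Hf _ HC a (gen_in a) Hs Hpi). unfold restrict_qs. rewrite Hz. reflexivity.
Qed.

Section P2.
Variable (Ifam : (A -> Prop) -> A -> R).
Hypothesis HI : prob_integral_family A Ifam.

Let J (h : A) := Ifam (Cstar_gen A h) h.

Lemma J_eq C h : in_CA A C -> C h -> astar h = h -> J h = Ifam C h.
Proof.
  intros HC Ch Hh. unfold J. destruct HI as [_ Hnat]. symmetry.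
  apply (Hnat (Cstar_gen A h) C); auto. apply gen_comm; auto.
  apply sub_of_gen; auto. apply gen_in.
Qed.

Lemma J0 : J O = 0.
Proof.
  destruct HI as [Hc _].
  assert (HC : in_CA A (Cstar_gen A O)) by (apply gen_comm; apply star0).
  destruct (Hc _ HC) as [Hadd _].
  pose proof (Hadd O O (gen_in O) star0 (gen_in O) star0). rewrite aadd_0 in H.
  unfold J. lra.
Qed.

Lemma ext_sa C f : in_CA A C -> C f -> astar f = f -> extend_pif A Ifam f = RtoC (Ifam C f).
Proof.
  intros HC Cf Hf. unfold extend_pif. rewrite re_of_sa, im_of_sa by auto.
  fold (J f). fold (J O). rewrite J0, (J_eq C f) by auto. reflexivity.
Qed.

Lemma ext_def (a : A) : extend_pif A Ifam a = mkC (J (re_part A a)) (J (im_part A a)).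
Proof. reflexivity. Qed.

Lemma part2 : quasi_state A (extend_pif A Ifam) /\
     (forall C, in_CA A C -> forall f : A, C f -> self_adjoint A f ->
        extend_pif A Ifam f = RtoC (Ifam C f)) /\
     (faithful_pif A Ifam <-> faithful_qs A (extend_pif A Ifam)).
Proof.
  pose proof HI as [Hc Hnat].
  assert (HE := ext_sa).
  split; [|split].
  - split; [split|split].
    + intros C HC. pose proof HC as [HCs _].
      destruct (Hc C HC) as (Hadd & Hsm & _ & _). split.
      * intros x y Cx Cy. rewrite !ext_def.
        assert (Er : re_part A (x ⊕ y) = re_part A x ⊕ re_part A y).
        { unfold re_part. rewrite starD. agroup. }
        assert (Ei : im_part A (x ⊕ y) = im_part A x ⊕ im_part A y).
        { unfold im_part. rewrite <- asmul_addr. f_equal. rewrite starD. agroup. }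
        rewrite Er, Ei.
        assert (R1 := re_sa x). assert (R2 := re_sa y). assert (R3 := im_sa x). assert (R4 := im_sa y).
        assert (M1 := re_in C x HCs Cx). assert (M2 := re_in C y HCs Cy).
        assert (M3 := im_in C x HCs Cx). assert (M4 := im_in C y HCs Cy).
        assert (S1 : astar (re_part A x ⊕ re_part A y) = re_part A x ⊕ re_part A y)
          by (rewrite starD, R1, R2; reflexivity).
        assert (S2 : astar (im_part A x ⊕ im_part A y) = im_part A x ⊕ im_part A y)
          by (rewrite starD, R3, R4; reflexivity).
        rewrite (J_eq C _ HC (sub_add C _ _ HCs M1 M2) S1), (J_eq C _ HC (sub_add C _ _ HCs M3 M4) S2).
        rewrite (J_eq C _ HC M1 R1), (J_eq C _ HC M2 R2), (J_eq C _ HC M3 R3), (J_eq C _ HC M4 R4).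
        rewrite !Hadd by auto.
        apply Cx_ext; simpl; ring.
      * intros s x Cx. destruct s as [al be].
        set (p := re_part A x). set (q := im_part A x).
        assert (Hp : astar p = p) by apply re_sa. assert (Hq : astar q = q) by apply im_sa.
        assert (Cp : C p) by (apply re_in; auto). assert (Cq : C q) by (apply im_in; auto).
        assert (Ex : asmul (mkC al be) x =
                     (al ⋅ p ⊕ (- be) ⋅ q) ⊕ asmul Ci (be ⋅ p ⊕ al ⋅ q)).
        { rewrite (re_im_dec x). fold p q.
          rewrite asmul_addr, asmul_assoc, (asmul_addr _ Ci), !asmul_assoc.
          transitivity ((asmul (RtoC al) p ⊕ asmul (Cmul Ci (RtoC be)) p) ⊕
                        (asmul (RtoC (-be)) q ⊕ asmul (Cmul Ci (RtoC al)) q)).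
          - rewrite <- !asmul_addl. f_equal; f_equal; apply Cx_ext; simpl; ring.
          - agroup. }
        assert (S1 : astar (al ⋅ p ⊕ (- be) ⋅ q) = al ⋅ p ⊕ (- be) ⋅ q)
          by (rewrite starD, !stars, Hp, Hq; reflexivity).
        assert (S2 : astar (be ⋅ p ⊕ al ⋅ q) = be ⋅ p ⊕ al ⋅ q)
          by (rewrite starD, !stars, Hp, Hq; reflexivity).
        rewrite !ext_def, Ex, re_uniq, im_uniq by auto. fold p q.
        assert (C1 : C (al ⋅ p ⊕ (- be) ⋅ q))
          by (apply (sub_add C); auto; apply (sub_smul C); auto).
        assert (C2 : C (be ⋅ p ⊕ al ⋅ q))
          by (apply (sub_add C); auto; apply (sub_smul C); auto).
        rewrite (J_eq C _ HC C1 S1), (J_eq C _ HC C2 S2), (J_eq C p), (J_eq C q) by auto.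
        assert (Kp : forall r, C (r ⋅ p)) by (intro r; apply (sub_smul C); auto).
        assert (Kq : forall r, C (r ⋅ q)) by (intro r; apply (sub_smul C); auto).
        assert (Lp : forall r, astar (r ⋅ p) = r ⋅ p) by (intro r; rewrite stars, Hp; reflexivity).
        assert (Lq : forall r, astar (r ⋅ q) = r ⋅ q) by (intro r; rewrite stars, Hq; reflexivity).
        rewrite (Hadd _ _ (Kp al) (Lp al) (Kq (-be)) (Lq (-be))).
        rewrite (Hadd _ _ (Kp be) (Lp be) (Kq al) (Lq al)).
        rewrite !Hsm by auto.
        apply Cx_ext; simpl; ring.
    + intros a b Ha Hb. rewrite !ext_def, re_uniq, im_uniq by auto.
      rewrite re_of_sa, im_of_sa, (re_of_sa b), (im_of_sa b) by auto. fold J.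
      rewrite J0. apply Cx_ext; simpl; ring.
    + intros a Hpa. destruct (pos_in_gen a Hpa) as (HC & Hpi & Hs).
      rewrite (HE _ a HC (gen_in a) Hs). simpl. split; auto.
      destruct (Hc _ HC) as (_ & _ & Hpos & _). apply Hpos; auto. apply gen_in.
    + assert (HC : in_CA A (Cstar_gen A I)) by (apply gen_comm; apply star1).
      rewrite (HE _ I HC (gen_in I) star1).
      destruct (Hc _ HC) as (_ & _ & _ & H1). rewrite H1. reflexivity.
  - intros C HC f Cf Hf. apply HE; auto.
  - split.
    + intros Hf a Hpa Hz. destruct (pos_in_gen a Hpa) as (HC & Hpi & Hs).
      rewrite (HE _ a HC (gen_in a) Hs) in Hz.
      apply (Hf _ HC a (gen_in a) Hs Hpi). injection Hz. auto.
    + intros Hf C HC f Cf Hs Hpi Hz. apply Hf.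
      destruct Hpi as [g [_ Hg]]. exists g; auto.
      rewrite (HE C f HC Cf Hs), Hz. reflexivity.
Qed.

End P2.

End Main.

Theorem theorem6 (A : CStarAlgebra) :
  (forall rho : A -> Cx, quasi_state A rho ->
     prob_integral_family A (restrict_qs A rho) /\
     (forall a : A, extend_pif A (restrict_qs A rho) a = rho a) /\
     (faithful_qs A rho <-> faithful_pif A (restrict_qs A rho))) /\
  (forall I : (A -> Prop) -> A -> R, prob_integral_family A I ->
     quasi_state A (extend_pif A I) /\
     (forall C, in_CA A C -> forall f : A, C f -> self_adjoint A f ->
        extend_pif A I f = RtoC (I C f)) /\
     (faithful_pif A I <-> faithful_qs A (extend_pif A I))).
Proof.
  split.
  - intros rho Hq. apply part1; auto.
  - intros I HI. apply part2; auto.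
Qed.
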